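(* Let $0<r_1<r_2$, $N\ge 2$, and let $h:[r_1,r_2]\times[0,\infty)\to[0,\infty)$ be continuous with $h(t,0)=0$. Let $q$ and $f$ be defined from $h$ as in the context, and consider, for $\lambda>0$, the boundary value problem $$u''(t)+\lambda q(t)f(t,u(t))=0,\quad t\in(0,1),\qquad u(0)=0=u(1). \qquad (P_\lambda)$$ Assume that $\lim_{u\to0^+}\frac{f(t,u)}{u}=\infty$ uniformly in $t\in(0,1)$. Then for each $R>0$ there exists a constant $\lambda_R>0$ such that for every $\lambda<\lambda_R$ (with $\lambda>0$), problem $(P_\lambda)$ has a positive solution $u$ with $\sup_{t\in[0,1]}u(t)\le R$.
   Context: The problem $(P_\lambda)$ arises from radial solutions of $-\Delta v=\lambda h(|x|,v)$ in the annulus $\{x\in\mathbb{R}^N: r_1<|x|<r_2\}$, $v=0$ on the boundary. The functions $q$ and $f$ are defined as follows. If $N=2$: $q(t)=\left[r_2\left(\frac{r_1}{r_2}\right)^t\log\frac{r_2}{r_1}\right]^2$ and $f(t,u)=h\!\left(r_2\left(\frac{r_1}{r_2}\right)^t,u\right)$. If $N\ge 3$: with $A=\frac{(r_1r_2)^{N-2}}{r_2^{N-2}-r_1^{N-2}}$ and $B=\frac{r_2^{N-2}}{r_2^{N-2}-r_1^{N-2}}$, $q(t)=(N-2)^{-2}\frac{A^{2/(N-2)}}{(B-t)^{2(N-1)/(N-2)}}$ and $f(t,u)=h\!\left(\left(\frac{A}{B-t}\right)^{1/(N-2)},u\right)$. In either case $q$ is continuous on $[0,1]$ and bounded between positive constants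 there. A positive solution of $(P_\lambda)$ is a function $u\in C([0,1])\cap C^2(0,1)$ satisfying $(P_\lambda)$ with $u(t)>0$ for $t\in(0,1)$. *)

(* Defs.v *)
From Stdlib Require Import Reals Lra.
From Coquelicot Require Import Coquelicot.
Open Scope R_scope.

Definition cA (r1 r2 : R) (N : nat) : R :=
  Rpower (r1 * r2) (INR N - 2) / (Rpower r2 (INR N - 2) - Rpower r1 (INR N - 2)).
Definition cB (r1 r2 : R) (N : nat) : R :=
  Rpower r2 (INR N - 2) / (Rpower r2 (INR N - 2) - Rpower r1 (INR N - 2)).

(* The change of variable t |-> radius r(t) in [r1, r2]. *)
Definition radius (r1 r2 : R) (N : nat) (t : R) : R :=
  match N with
  | 2%nat => r2 * Rpower (r1 / r2) t
  | _ => Rpower (cA r1 r2 N / (cB r1 r2 N - t)) (1 / (INR N - 2))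
  end.

Definition qfun (r1 r2 : R) (N : nat) (t : R) : R :=
  match N with
  | 2%nat => (r2 * Rpower (r1 / r2) t * ln (r2 / r1)) ^ 2
  | _ => / ((INR N - 2) ^ 2) * Rpower (cA r1 r2 N) (2 / (INR N - 2))
         / Rpower (cB r1 r2 N - t) (2 * (INR N - 1) / (INR N - 2))
  end.

Definition ffun (r1 r2 : R) (N : nat) (h : R -> R -> R) (t u : R) : R :=
  h (radius r1 r2 N t) u.

Definition continuous_on_domain (r1 r2 : R) (h : R -> R -> R) : Prop :=
  forall t u, r1 <= t <= r2 -> 0 <= u ->
  forall eps, 0 < eps -> exists delta, 0 < delta /\
    forall t' u', r1 <= t' <= r2 -> 0 <= u' ->
      Rabs (t' - t) < delta -> Rabs (u' - u) < delta ->
      Rabs (h t' u' - h t u) < eps.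

Definition continuous_on_01 (u : R -> R) : Prop :=
  forall x, 0 <= x <= 1 -> forall eps, 0 < eps -> exists delta, 0 < delta /\
    forall y, 0 <= y <= 1 -> Rabs (y - x) < delta -> Rabs (u y - u x) < eps.

Definition C2_open01 (u : R -> R) : Prop :=
  forall t, 0 < t < 1 ->
    ex_derive u t /\ ex_derive (Derive u) t /\
    continuous (Derive (Derive u)) t.

Definition positive_solution (r1 r2 : R) (N : nat) (h : R -> R -> R)
  (lam : R) (u : R -> R) : Prop :=
  continuous_on_01 u /\ C2_open01 u /\
  (forall t, 0 < t < 1 ->
     Derive (Derive u) t + lam * qfun r1 r2 N t * ffun r1 r2 N h t (u t) = 0) /\
  u 0 = 0 /\ u 1 = 0 /\
  (forall t, 0 < t < 1 -> 0 < u t).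

(* Main.v *)
Require Import Defs.
From Stdlib Require Import Reals Lra Lia ZArith.
From Stdlib Require Import Classical IndefiniteDescription.
Open Scope R_scope.

Fixpoint sch (G : R -> R -> R) (N : nat) (lam s : R) (k : nat) : R * R :=
  match k with
  | O => (0, s)
  | S k' => let xp := sch G N lam s k' in
            let x' := fst xp + snd xp / INR N in
            (x', snd xp - lam / INR N * G (INR (S k') / INR N) x')
  end.
Definition sx G N lam s k := fst (sch G N lam s k).
Definition sp G N lam s k := snd (sch G N lam s k).

Section DiscS.
Variable G : R -> R -> R.
Variable N : nat.
Variables lam s : R.
Hypothesis HG0 : forall t y, 0 <= G t y.
Hypothesis HN : (1 <= N)%nat.
Hypothesis Hlam : 0 < lam.

Notation x := (sx G N lam s).
Notation p := (sp G N lam s).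

Lemma sx_0 : x 0 = 0. Proof. reflexivity. Qed.
Lemma sp_0 : p 0 = s. Proof. reflexivity. Qed.
Lemma sx_S k : x (S k) = x k + p k / INR N. Proof. reflexivity. Qed.
Lemma sp_S k : p (S k) = p k - lam / INR N * G (INR (S k) / INR N) (x (S k)).
Proof. reflexivity. Qed.

Lemma INRN_pos : 0 < INR N.
Proof. apply lt_0_INR. lia. Qed.

Lemma p_mono1 k : p (S k) <= p k.
Proof.
  rewrite sp_S. pose proof INRN_pos.
  assert (0 <= lam / INR N * G (INR (S k) / INR N) (x (S k))).
  { apply Rmult_le_pos; [|apply HG0]. apply Rlt_le, Rdiv_lt_0_compat; lra. }
  lra.
Qed.

Lemma p_mono i j : (i <= j)%nat -> p j <= p i.
Proof.
  induction 1. lra. pose proof (p_mono1 m). lra.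
Qed.

Lemma x_diff i m :
  INR m / INR N * p (i + m) <= x (i + m) - x i <= INR m / INR N * p i.
Proof.
  pose proof INRN_pos.
  induction m.
  - rewrite Nat.add_0_r. simpl. unfold Rdiv. lra.
  - rewrite Nat.add_succ_r, sx_S, S_INR.
    pose proof (p_mono1 (i + m)).
    pose proof (p_mono i (i + m) ltac:(lia)).
    assert (0 <= INR m / INR N) by (apply Rmult_le_pos; [apply pos_INR| apply Rlt_le, Rinv_0_lt_compat; lra]).
    assert (INR m / INR N * p (S (i + m)) <= INR m / INR N * p (i + m)) by (apply Rmult_le_compat_l; lra).
    assert (INR m / INR N * p (i + m) <= INR m / INR N * p i) by (apply Rmult_le_compat_l; lra).
    assert (p (S (i+m)) / INR N <= p (i + m) / INR N) by (apply Rmult_le_compat_r; [apply Rlt_le, Rinv_0_lt_compat; lra| lra]).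
    assert (p (i+m) / INR N <= p i / INR N) by (apply Rmult_le_compat_r; [apply Rlt_le, Rinv_0_lt_compat; lra| lra]).
    replace ((INR m + 1) / INR N * p (S (i + m))) with (INR m / INR N * p (S (i + m)) + p (S (i+m)) / INR N) by (field; lra).
    replace ((INR m + 1) / INR N * p i) with (INR m / INR N * p i + p i / INR N) by (field; lra).
    lra.
Qed.

Lemma x_diff2 i j : (i <= j)%nat ->
  (INR j - INR i) / INR N * p j <= x j - x i <= (INR j - INR i) / INR N * p i.
Proof.
  intros H. pose proof (x_diff i (j-i)) as H'. replace (i + (j-i))%nat with j in H' by lia.
  rewrite minus_INR in H' by lia. exact H'.
Qed.

Lemma concave i k j : (i <= k)%nat -> (k <= j)%nat ->
  (INR j - INR k) * x i + (INR k - INR i) * x j <= (INR j - INR i) * x k.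
Proof.
  intros H1 H2. pose proof INRN_pos.
  destruct (x_diff2 i k H1) as [A _]. destruct (x_diff2 k j H2) as [_ B].
  apply le_INR in H1. apply le_INR in H2.
  set (P := p k) in *.
  assert (0 <= (INR j - INR k) * (x k - x i - (INR k - INR i) / INR N * P)) by (apply Rmult_le_pos; lra).
  assert (0 <= (INR k - INR i) * ((INR j - INR k) / INR N * P - (x j - x k))) by (apply Rmult_le_pos; lra).
  assert ((INR j - INR k) * ((INR k - INR i) / INR N * P) = (INR k - INR i) * ((INR j - INR k) / INR N * P)) by (field; lra).
  nra.
Qed.

Lemma p_le_s k : p k <= s.
Proof. rewrite <- sp_0. apply p_mono. lia. Qed.

Lemma x_le k : x k <= s * INR k / INR N.
Proof.
  pose proof INRN_pos.
  destruct (x_diff2 0 k ltac:(lia)) as [_ B]. rewrite sx_0, sp_0 in B. simpl in B.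
  replace (s * INR k / INR N) with ((INR k - 0) / INR N * s) by (field; lra). lra.
Qed.

Lemma x_nonneg k : (k <= N)%nat -> 0 <= x N -> 0 <= x k.
Proof.
  intros Hk HxN. pose proof INRN_pos.
  pose proof (concave 0 k N ltac:(lia) Hk). rewrite sx_0 in H0. simpl in H0.
  apply le_INR in Hk.
  destruct (Rle_lt_dec 0 (x k)) as [|Hn]; auto.
  assert (0 <= (INR k - 0) * x N) by (apply Rmult_le_pos; [pose proof (pos_INR k)|]; lra).
  assert ((INR N - 0) * x k < 0) by (apply Rmult_lt_0_compat_l_neg; lra) || nra.
  nra.
Qed.


Lemma x_lower j d k : (j <= N)%nat -> (k <= N)%nat -> x N = 0 -> d <= x j -> 0 <= d ->
  d * (INR k / INR N) * (1 - INR k / INR N) <= x k.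
Proof.
  intros Hj Hk HxN Hd Hd0. pose proof INRN_pos.
  assert (Hxk : 0 <= x k) by (apply x_nonneg; [exact Hk | lra]).
  pose proof (le_INR _ _ Hj). pose proof (le_INR _ _ Hk). pose proof (pos_INR k). pose proof (pos_INR j).
  assert (Hmain : d * INR k * (INR N - INR k) <= INR N * INR N * x k).
  { destruct (Nat.le_ge_cases k j) as [Hkj|Hkj].
    - pose proof (concave 0 k j ltac:(lia) Hkj) as C. rewrite sx_0 in C. simpl in C.
      (* j x_k >= k x_j >= k d *)
      assert (INR k * d <= INR k * x j) by (apply Rmult_le_compat_l; lra).
      assert (INR j * x k <= INR N * x k) by (apply Rmult_le_compat_r; lra).
      assert (d * INR k * (INR N - INR k) <= d * INR k * INR N) by (assert (0 <= d * INR k) by (apply Rmult_le_pos; lra); nra).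
      assert (INR N * x k * INR N = INR N * INR N * x k) by ring. nra.
    - pose proof (concave j k N Hkj Hk) as C. rewrite HxN in C.
      pose proof (le_INR _ _ Hkj).
      assert ((INR N - INR k) * d <= (INR N - INR k) * x j) by (apply Rmult_le_compat_l; lra).
      assert ((INR N - INR j) * x k <= INR N * x k) by (apply Rmult_le_compat_r; lra).
      assert (0 <= d * (INR N - INR k)) by (apply Rmult_le_pos; lra).
      assert (d * (INR N - INR k) * INR k <= d * (INR N - INR k) * INR N) by (apply Rmult_le_compat_l; lra).
      nra. }
  replace (d * (INR k / INR N) * (1 - INR k / INR N)) with ((d * INR k * (INR N - INR k)) / (INR N * INR N)) by (field; lra).
  apply (Rmult_le_reg_r (INR N * INR N)). nra.
  unfold Rdiv. rewrite Rmult_assoc, Rinv_l by nra. nra.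
Qed.

Lemma p_cont i m eps Gs : (forall l, (i < l)%nat -> (l <= i + m)%nat ->
     Rabs (G (INR l / INR N) (x l) - Gs) <= eps) ->
  Rabs (p (i + m) - p i + lam * (INR m / INR N) * Gs) <= lam * (INR m / INR N) * eps.
Proof.
  intros Hl. pose proof INRN_pos.
  induction m.
  - rewrite Nat.add_0_r. simpl. replace (p i - p i + lam * (0 / INR N) * Gs) with 0 by (field; lra).
    rewrite Rabs_R0. replace (lam * (0 / INR N) * eps) with 0 by (field; lra). lra.
  - rewrite Nat.add_succ_r, sp_S. replace (INR (S m)) with (INR m + 1) by (rewrite S_INR; ring).
    assert (IH : Rabs (p (i + m) - p i + lam * (INR m / INR N) * Gs) <= lam * (INR m / INR N) * eps)
      by (apply IHm; intros; apply Hl; lia).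
    pose proof (Hl (S (i + m)) ltac:(lia) ltac:(lia)) as Hg.
    replace (p (i + m) - lam / INR N * G (INR (S (i + m)) / INR N) (x (S (i + m))) - p i + lam * ((INR m + 1) / INR N) * Gs)
      with ((p (i + m) - p i + lam * (INR m / INR N) * Gs) + (- (lam / INR N)) * (G (INR (S (i + m)) / INR N) (x (S (i + m))) - Gs)) by (field; lra).
    eapply Rle_trans. apply Rabs_triang. rewrite Rabs_mult, Rabs_Ropp, (Rabs_right (lam / INR N)).
    2: { apply Rle_ge, Rlt_le, Rdiv_lt_0_compat; lra. }
    assert (lam / INR N * Rabs (G (INR (S (i + m)) / INR N) (x (S (i + m))) - Gs) <= lam / INR N * eps).
    { apply Rmult_le_compat_l; [apply Rlt_le, Rdiv_lt_0_compat; lra | exact Hg]. }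
    replace (lam * ((INR m + 1) / INR N) * eps) with (lam * (INR m / INR N) * eps + lam / INR N * eps) by (field; lra).
    lra.
Qed.

Section Bounds.
Variables Rb Gm : R.
Hypothesis HGb : forall t y, y <= Rb -> G t y <= Gm.
Hypothesis Hs : 0 <= s <= Rb.

Lemma x_le_Rb k : (k <= N)%nat -> x k <= Rb.
Proof.
  intros Hk. pose proof INRN_pos. pose proof (x_le k). apply le_INR in Hk.
  assert (s * INR k / INR N <= s).
  { apply (Rmult_le_reg_r (INR N)); auto. unfold Rdiv. rewrite Rmult_assoc, Rinv_l by lra.
    assert (0 <= s) by lra. nra. }
  lra.
Qed.

Lemma p_lip i m : (i + m <= N)%nat ->
  p i - p (i + m) <= lam * Gm * (INR m / INR N).
Proof.
  intros H. pose proof INRN_pos. induction m.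
  - rewrite Nat.add_0_r. simpl. replace (lam * Gm * (0 / INR N)) with 0 by (field; lra). lra.
  - rewrite Nat.add_succ_r, sp_S. replace (INR (S m)) with (INR m + 1) by (rewrite S_INR; ring).
    assert (IH : p i - p (i + m) <= lam * Gm * (INR m / INR N)) by (apply IHm; lia).
    assert (G (INR (S (i + m)) / INR N) (x (S (i + m))) <= Gm) by (apply HGb, x_le_Rb; lia).
    assert (lam / INR N * G (INR (S (i + m)) / INR N) (x (S (i + m))) <= lam / INR N * Gm)
      by (apply Rmult_le_compat_l; [apply Rlt_le, Rdiv_lt_0_compat; lra| lra]).
    replace (lam * Gm * ((INR m + 1) / INR N)) with (lam * Gm * (INR m / INR N) + lam / INR N * Gm) by (field; lra).
    lra.
Qed.

Lemma p_lip2 i j : (i <= j)%nat -> (j <= N)%nat ->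
  0 <= p i - p j <= lam * Gm * ((INR j - INR i) / INR N).
Proof.
  intros H1 H2. split. pose proof (p_mono i j H1). lra.
  pose proof (p_lip i (j - i) ltac:(lia)) as H. replace (i + (j - i))%nat with j in H by lia.
  rewrite minus_INR in H by lia. exact H.
Qed.

Lemma p_lower k : (k <= N)%nat -> s - lam * Gm <= p k.
Proof.
  intros Hk. pose proof INRN_pos. destruct (p_lip2 0 k ltac:(lia) Hk) as [_ Hq].
  rewrite sp_0 in Hq. rewrite INR_0 in Hq.
  assert (Gm >= 0 \/ Gm < 0) as [HG|HG] by lra.
  - assert ((INR k - 0) / INR N <= 1).
    { apply le_INR in Hk. apply (Rmult_le_reg_r (INR N)); auto. unfold Rdiv. rewrite Rmult_assoc, Rinv_l by lra. lra. }
    assert (lam * Gm * ((INR k - 0) / INR N) <= lam * Gm * 1) by (apply Rmult_le_compat_l; [apply Rmult_le_pos|]; lra).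
    lra.
  - pose proof (HGb 0 (Rb - 1) ltac:(lra)). pose proof (HG0 0 (Rb - 1)). lra.
Qed.

Lemma x_taylor i j : (i <= j)%nat -> (j <= N)%nat ->
  Rabs (x j - x i - (INR j - INR i) / INR N * p i) <= lam * Gm * ((INR j - INR i) / INR N) ^ 2 /\
  Rabs (x j - x i - (INR j - INR i) / INR N * p j) <= lam * Gm * ((INR j - INR i) / INR N) ^ 2.
Proof.
  intros H1 H2. pose proof INRN_pos.
  destruct (x_diff2 i j H1) as [A B]. destruct (p_lip2 i j H1 H2) as [C D].
  assert (Hh : 0 <= (INR j - INR i) / INR N).
  { apply le_INR in H1. apply Rmult_le_pos; [lra| apply Rlt_le, Rinv_0_lt_compat; lra]. }
  set (h := (INR j - INR i) / INR N) in *.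
  assert (h * (p i - p j) <= h * (lam * Gm * h)) by (apply Rmult_le_compat_l; lra).
  assert (0 <= h * (p i - p j)) by (apply Rmult_le_pos; lra).
  split; apply Rabs_le; simpl; nra.
Qed.

Lemma x_lip i j : (i <= j)%nat -> (j <= N)%nat ->
  Rabs (x j - x i) <= (Rb + lam * Gm) * ((INR j - INR i) / INR N).
Proof.
  intros H1 H2. pose proof INRN_pos.
  destruct (x_diff2 i j H1) as [A B].
  assert (Hh : 0 <= (INR j - INR i) / INR N).
  { apply le_INR in H1. apply Rmult_le_pos; [lra| apply Rlt_le, Rinv_0_lt_compat; lra]. }
  pose proof (p_lower j H2). pose proof (p_le_s i).
  assert (0 <= lam * Gm).
  { apply Rmult_le_pos. lra. pose proof (HGb 0 (Rb - 1) ltac:(lra)). pose proof (HG0 0 (Rb - 1)). lra. }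
  set (h := (INR j - INR i) / INR N) in *.
  apply Rabs_le. split; nra.
Qed.

Lemma p_abs k : (k <= N)%nat -> Rabs (p k) <= Rb + lam * Gm.
Proof.
  intros Hk. pose proof (p_lower k Hk). pose proof (p_le_s k).
  assert (0 <= lam * Gm).
  { apply Rmult_le_pos. lra. pose proof (HGb 0 (Rb - 1) ltac:(lra)). pose proof (HG0 0 (Rb - 1)). lra. }
  apply Rabs_le. lra.
Qed.


Lemma x_lip_abs i j : (i <= N)%nat -> (j <= N)%nat ->
  Rabs (x j - x i) <= (Rb + lam * Gm) * (Rabs (INR j - INR i) / INR N).
Proof.
  intros Hi Hj. destruct (Nat.le_ge_cases i j) as [H|H].
  - rewrite (Rabs_right (INR j - INR i)). apply x_lip; auto.
    apply le_INR in H. lra.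
  - rewrite Rabs_minus_sym. rewrite (Rabs_left1 (INR j - INR i)).
    replace (- (INR j - INR i)) with (INR i - INR j) by ring. apply x_lip; auto.
    apply le_INR in H. lra.
Qed.

Lemma x_taylor_abs k k' : (k <= N)%nat -> (k' <= N)%nat ->
  Rabs (x k' - x k - (INR k' - INR k) / INR N * p k) <= lam * Gm * ((INR k' - INR k) / INR N) ^ 2.
Proof.
  intros Hk Hk'. destruct (Nat.le_ge_cases k k') as [H|H].
  - apply x_taylor; auto.
  - destruct (x_taylor k' k H Hk) as [_ B].
    replace (x k' - x k - (INR k' - INR k) / INR N * p k) with (- (x k - x k' - (INR k - INR k') / INR N * p k)) by (unfold Rdiv; ring).
    rewrite Rabs_Ropp. replace (((INR k' - INR k) / INR N) ^ 2) with (((INR k - INR k') / INR N) ^ 2) by (unfold Rdiv; ring).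
    exact B.
Qed.

End Bounds.

Lemma p_cont_abs k k' eps Gs : 
  (forall l, ((k < l)%nat /\ (l <= k')%nat) \/ ((k' < l)%nat /\ (l <= k)%nat) ->
     Rabs (G (INR l / INR N) (x l) - Gs) <= eps) ->
  Rabs (p k' - p k + lam * ((INR k' - INR k) / INR N) * Gs) <= lam * (Rabs (INR k' - INR k) / INR N) * eps.
Proof.
  intros Hl. destruct (Nat.le_ge_cases k k') as [H|H].
  - pose proof (p_cont k (k' - k) eps Gs) as P. replace (k + (k' - k))%nat with k' in P by lia.
    rewrite minus_INR in P by lia. rewrite (Rabs_right (INR k' - INR k)). apply P.
    intros l H1 H2. apply Hl. left. lia. apply le_INR in H. lra.
  - pose proof (p_cont k' (k - k') eps Gs) as P. replace (k' + (k - k'))%nat with k in P by lia.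
    rewrite minus_INR in P by lia.
    replace (p k' - p k + lam * ((INR k' - INR k) / INR N) * Gs) with (- (p k - p k' + lam * ((INR k - INR k') / INR N) * Gs)) by (field; pose proof INRN_pos; lra).
    rewrite Rabs_Ropp, (Rabs_left1 (INR k' - INR k)). replace (- (INR k' - INR k)) with (INR k - INR k') by ring. apply P.
    intros l H1 H2. apply Hl. right. lia. apply le_INR in H. lra.
Qed.



Lemma cosb a : - PI/2 <= a -> a <= PI/2 -> 1 - a*a/2 <= cos a.
Proof. intros H1 H2. destruct (cos_bound a 0 H1 H2) as [H _].
  unfold cos_approx, cos_term in H. simpl in H. lra. Qed.

Lemma sine_neg (d M : R) : (2 <= N)%nat -> 0 < s -> 16 < lam * M ->
  (forall t y, 0 < t < 1 -> 0 < y < d -> M * y <= G t y) ->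
  (forall k, (1 <= k)%nat -> (k < N)%nat -> 0 <= x k < d) -> x N < 0.
Proof.
  intros HN2 Hs HM Hd Hx.
  pose proof INRN_pos.
  assert (HN2r : 2 <= INR N) by (apply (le_INR 2); lia).
  pose proof PI_RGT_0 as Hpi. pose proof PI_4 as Hpi4.
  set (w := fun k => sin (PI * INR k / INR N)).
  set (c := 2 - 2 * cos (PI / INR N)).
  assert (Hc : c <= 16 / (INR N * INR N)).
  { unfold c. assert (PI / INR N <= PI / 2).
    { apply Rmult_le_compat_l; [lra|]. apply Rinv_le_contravar; lra. }
    assert (0 < PI / INR N) by (apply Rdiv_lt_0_compat; lra).
    pose proof (cosb (PI / INR N) ltac:(lra) ltac:(lra)).
    assert (PI / INR N * (PI / INR N) <= 16 / (INR N * INR N)).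
    { replace (PI / INR N * (PI / INR N)) with ((PI * PI) / (INR N * INR N)) by (field; lra).
      apply Rmult_le_compat_r. apply Rlt_le, Rinv_0_lt_compat; nra. nra. }
    lra. }
  assert (Hrec : forall k, w (S (S k)) + w k = 2 * cos (PI / INR N) * w (S k)).
  { intros k. unfold w. rewrite !S_INR.
    replace (PI * (INR k + 1 + 1) / INR N) with (PI * (INR k + 1) / INR N + PI / INR N) by (field; lra).
    replace (PI * INR k / INR N) with (PI * (INR k + 1) / INR N - PI / INR N) by (field; lra).
    rewrite sin_plus, sin_minus. ring. }
  assert (Hw0 : forall k, (k <= N)%nat -> 0 <= w k).
  { intros k Hk. unfold w. apply sin_ge_0.
    apply Rmult_le_pos; [apply Rmult_le_pos; [lra| apply pos_INR]| apply Rlt_le, Rinv_0_lt_compat; lra].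
    apply le_INR in Hk. apply (Rmult_le_reg_r (INR N)); auto. unfold Rdiv.
    rewrite Rmult_assoc, Rinv_l by lra. nra. }
  assert (Hwpos : forall k, (1 <= k)%nat -> (k < N)%nat -> 0 < w k).
  { intros k Hk1 Hk2. unfold w. apply sin_gt_0.
    apply Rdiv_lt_0_compat; [apply Rmult_lt_0_compat; [lra| apply lt_0_INR; lia]| lra].
    apply lt_INR in Hk2. apply (Rmult_lt_reg_r (INR N)); auto. unfold Rdiv.
    rewrite Rmult_assoc, Rinv_l by lra. nra. }
  assert (HwN : w N = 0).
  { unfold w. replace (PI * INR N / INR N) with PI by (field; lra). apply sin_PI. }
  assert (Hw00 : w 0%nat = 0).
  { unfold w. rewrite INR_0. replace (PI * 0 / INR N) with 0 by (field; lra). apply sin_0. }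
  set (E := fun m => w m * x (S m) - x m * w (S m)).
  assert (HM' : c - lam * M / (INR N * INR N) < 0).
  { assert (16 / (INR N * INR N) < lam * M / (INR N * INR N)).
    { apply Rmult_lt_compat_r; [apply Rinv_0_lt_compat; nra| lra]. }
    lra. }
  assert (Hstep : forall m, (S m < N)%nat ->
     E (S m) <= E m + x (S m) * w (S m) * (c - lam * M / (INR N * INR N))).
  { intros m Hm. unfold E.
    assert (Hdx : x (S (S m)) - 2 * x (S m) + x m = - (lam / (INR N * INR N)) * G (INR (S m) / INR N) (x (S m))).
    { rewrite (sx_S (S m)). rewrite (sp_S m). rewrite (sx_S m). field. lra. }
    pose proof (Hrec m) as Hr.
    destruct (Hx (S m) ltac:(lia) Hm) as [Hx0 Hxd].
    assert (HG : M * x (S m) <= G (INR (S m) / INR N) (x (S m))).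
    { destruct (Rle_lt_or_eq_dec 0 (x (S m)) Hx0) as [Hp|He].
      - apply Hd; [|lra]. split.
        apply Rdiv_lt_0_compat; [apply lt_0_INR; lia| lra].
        apply lt_INR in Hm. apply (Rmult_lt_reg_r (INR N)); auto. unfold Rdiv.
        rewrite Rmult_assoc, Rinv_l by lra. lra.
      - rewrite <- He. rewrite Rmult_0_r. apply HG0. }
    assert (Hws : 0 <= w (S m)) by (apply Hw0; lia).
    assert (Hl : lam / (INR N * INR N) * (M * x (S m)) <= lam / (INR N * INR N) * G (INR (S m) / INR N) (x (S m))).
    { apply Rmult_le_compat_l; [apply Rlt_le, Rdiv_lt_0_compat; nra| exact HG]. }
    assert (Eq : w (S m) * x (S (S m)) - x (S m) * w (S (S m)) - (w m * x (S m) - x m * w (S m))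
      = w (S m) * (x (S (S m)) - 2 * x (S m) + x m) - x (S m) * (w (S (S m)) + w m - 2 * w (S m))) by ring.
    rewrite Hdx, Hr in Eq.
    assert (w (S m) * (lam / (INR N * INR N) * (M * x (S m))) <= w (S m) * (lam / (INR N * INR N) * G (INR (S m) / INR N) (x (S m))))
      by (apply Rmult_le_compat_l; auto).
    unfold c.
    replace (lam * M / (INR N * INR N)) with (lam / (INR N * INR N) * M) by (field; lra).
    nra. }
  assert (HE0 : E 0%nat = 0) by (unfold E; rewrite Hw00, sx_0; ring).
  assert (HE : forall m, (S m < N)%nat -> E (S m) < 0).
  { induction m; intros Hm.
    - pose proof (Hstep 0%nat Hm) as H1. rewrite HE0 in H1.
      assert (Hx1 : 0 < x 1) by (rewrite sx_S, sx_0, sp_0, Rplus_0_l; apply Rdiv_lt_0_compat; lra).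
      assert (0 < w 1%nat) by (apply Hwpos; lia).
      assert (0 < x 1%nat * w 1%nat) by (apply Rmult_lt_0_compat; lra).
      assert (x 1%nat * w 1%nat * (c - lam * M / (INR N * INR N)) < 0) by (apply Rmult_lt_0_compat_l_neg || nra).
      lra.
    - pose proof (Hstep (S m) Hm) as H1. pose proof (IHm ltac:(lia)).
      destruct (Hx (S (S m)) ltac:(lia) Hm).
      assert (0 <= w (S (S m))) by (apply Hw0; lia).
      assert (0 <= x (S (S m)) * w (S (S m))) by (apply Rmult_le_pos; lra).
      nra. }
  pose proof (HE (N - 2)%nat ltac:(lia)) as H1. unfold E in H1.
  replace (S (S (N - 2))) with N in H1 by lia. rewrite HwN in H1.
  assert (0 < w (S (N - 2))) by (apply Hwpos; lia).
  nra.
Qed.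

End DiscS.



Lemma sch_cont G N lam (HGc : forall t, continuity (G t)) k :
  continuity (fun s => sx G N lam s k) /\ continuity (fun s => sp G N lam s k).
Proof.
  induction k.
  - split.
    + apply continuity_const. intros a b. reflexivity.
    + change (continuity (fun s => s)). apply derivable_continuous, derivable_id.
  - destruct IHk as [Hx Hp].
    assert (Hx' : continuity (fun s => sx G N lam s (S k))).
    { change (continuity (fun s => sx G N lam s k + sp G N lam s k / INR N)).
      apply (continuity_plus (fun s => sx G N lam s k) (fun s => sp G N lam s k / INR N)); auto.
      change (continuity (fun s => sp G N lam s k * / INR N)).
      apply (continuity_mult (fun s => sp G N lam s k) (fun _ => / INR N)); auto.
      apply continuity_const. intros a b. reflexivity. }
    split; auto.
    change (continuity (fun s => sp G N lam s k - lam / INR N * G (INR (S k) / INR N) (sx G N lam s (S k)))).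
    apply (continuity_minus (fun s => sp G N lam s k) (fun s => lam / INR N * G (INR (S k) / INR N) (sx G N lam s (S k)))); auto.
    apply (continuity_scal (fun s => G (INR (S k) / INR N) (sx G N lam s (S k))) (lam / INR N)).
    apply (continuity_comp (fun s => sx G N lam s (S k)) (G (INR (S k) / INR N))); auto.
Qed.

Section Shoot.
Variable G : R -> R -> R.
Variable N : nat.
Variables lam Rb Gm d M : R.
Hypothesis HG0 : forall t y, 0 <= G t y.
Hypothesis HGc : forall t, continuity (G t).
Hypothesis HGb : forall t y, y <= Rb -> G t y <= Gm.
Hypothesis HN2 : (2 <= N)%nat.
Hypothesis Hlam : 0 < lam.
Hypothesis HlamG : lam * Gm < Rb.
Hypothesis HM : 16 < lam * M.
Hypothesis Hd : forall t y, 0 < t < 1 -> 0 < y < d -> M * y <= G t y.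
Hypothesis Hd0 : 0 < d.
Hypothesis HdR : d <= Rb.

Lemma no_small_sol s : 0 < s -> 0 <= sx G N lam s N ->
  (forall k, (k <= N)%nat -> sx G N lam s k < d) -> False.
Proof.
  intros Hs HxN Hk.
  assert (HN : (1 <= N)%nat) by lia.
  assert (sx G N lam s N < 0); [|lra].
  apply (sine_neg G N lam s HG0 HN Hlam d M HN2 Hs HM Hd).
  intros k H1 H2. split.
  - apply x_nonneg; auto. lia.
  - apply Hk. lia.
Qed.

Lemma shoot : { s | d / 2 <= s <= Rb /\ sx G N lam s N = 0 }.
Proof.
  assert (HN : (1 <= N)%nat) by lia.
  pose proof (INRN_pos N HN).
  apply IVT.
  - apply sch_cont; auto.
  - lra.
  - destruct (Rlt_le_dec (sx G N lam (d/2) N) 0) as [|Hge]; auto.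
    exfalso. apply (no_small_sol (d/2)); auto. lra.
    intros k Hk. pose proof (x_le G N lam (d/2) HG0 HN Hlam k).
    apply le_INR in Hk.
    assert (d / 2 * INR k / INR N <= d / 2).
    { apply (Rmult_le_reg_r (INR N)); auto. unfold Rdiv. rewrite Rmult_assoc, Rinv_l by lra. nra. }
    lra.
  - pose proof (x_diff2 G N lam Rb HG0 HN Hlam 0 N ltac:(lia)) as [A _].
    rewrite sx_0, INR_0 in A.
    replace ((INR N - 0) / INR N) with 1 in A by (field; lra).
    pose proof (p_lower G N lam Rb HG0 HN Hlam Rb Gm HGb ltac:(lra) N ltac:(lia)).
    lra.
Qed.

Lemma sol_props s : d / 2 <= s <= Rb -> sx G N lam s N = 0 ->
  (forall k, (k <= N)%nat -> 0 <= sx G N lam s k <= Rb) /\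
  (forall k, (k <= N)%nat -> d * (INR k / INR N) * (1 - INR k / INR N) <= sx G N lam s k).
Proof.
  intros Hs HxN.
  assert (HN : (1 <= N)%nat) by lia.
  split.
  - intros k Hk. split. apply x_nonneg; auto. lra.
    apply (x_le_Rb G N lam s HG0 HN Hlam Rb); auto. lra.
  - assert (exists j, (j <= N)%nat /\ d <= sx G N lam s j) as [j [Hj Hdj]].
    { apply Classical_Prop.NNPP. intros Hn. apply (no_small_sol s); [lra|lra|].
      intros k Hk. destruct (Rlt_le_dec (sx G N lam s k) d) as [|Hle]; auto.
      exfalso. apply Hn. exists k. auto. }
    intros k Hk. apply (x_lower G N lam s HG0 HN Hlam j d k); auto. lra.
Qed.

End Shoot.

Lemma Rabs_le_inv a b : Rabs a <= b -> - b <= a <= b.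
Proof. unfold Rabs. destruct (Rcase_abs a); intros; lra. Qed.

Lemma INR_unbounded A : exists n : nat, A < INR n.
Proof.
  destruct (archimed A) as [H1 _]. exists (Z.to_nat (up A)).
  destruct (Z_le_gt_dec 0 (up A)) as [Hz|Hz].
  - rewrite INR_IZR_INZ, Z2Nat.id by lia. lra.
  - pose proof (pos_INR (Z.to_nat (up A))). apply Z.gt_lt in Hz. apply IZR_lt in Hz. lra.
Qed.

Section UF.
Variable U : (nat -> Prop) -> Prop.
Hypothesis U_mono : forall A B : nat -> Prop, U A -> (forall n, A n -> B n) -> U B.
Hypothesis U_and : forall A B : nat -> Prop, U A -> U B -> U (fun n => A n /\ B n).
Hypothesis U_ne : ~ U (fun _ => False).
Hypothesis U_ultra : forall A : nat -> Prop, U A \/ U (fun n => ~ A n).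
Hypothesis U_cof : forall N, U (fun n => (N <= n)%nat).

Lemma U_ex A : U A -> exists n, A n.
Proof.
  intros H. apply NNPP. intros Hn. apply U_ne. apply (U_mono A); auto.
  intros n Hn'. apply Hn. exists n; auto.
Qed.

Lemma U_all (A : nat -> Prop) : (forall n, A n) -> U A.
Proof. intros H. apply (U_mono _ _ (U_cof 0)). auto. Qed.

Definition UL (a : nat -> R) (A : R) := forall eps, 0 < eps -> U (fun m => Rabs (a m - A) < eps).

Lemma ulim_ex a : (exists B, forall m, Rabs (a m) <= B) -> exists A, UL a A.
Proof.
  intros [B HB].
  set (S := fun x => U (fun m => x <= a m)).
  assert (Hb : bound S).
  { exists B. intros x Hx. destruct (Rle_lt_dec x B) as [|Hlt]; auto.
    exfalso. apply U_ne. apply (U_mono _ _ Hx). intros m Hm. pose proof (HB m).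
    apply Rabs_le_inv in H. lra. }
  assert (He : exists x, S x).
  { exists (-B). apply U_all. intros m. pose proof (HB m). apply Rabs_le_inv in H. lra. }
  destruct (completeness S Hb He) as [L [Hub Hlub]].
  exists L. intros eps Heps.
  assert (H1 : U (fun m => L - eps < a m)).
  { apply NNPP. intros Hn.
    assert (Hup : is_upper_bound S (L - eps)).
    { intros x Hx. destruct (Rle_lt_dec x (L - eps)) as [|Hlt]; auto. exfalso.
      apply Hn. apply (U_mono _ _ Hx). intros m Hm. lra. }
    pose proof (Hlub _ Hup). lra. }
  assert (H2 : U (fun m => a m < L + eps)).
  { destruct (U_ultra (fun m => L + eps / 2 <= a m)) as [Hu|Hu].
    - pose proof (Hub (L + eps/2) Hu). lra.
    - apply (U_mono _ _ Hu). intros m Hm. apply Rnot_le_lt in Hm. lra. }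
  apply (U_mono _ _ (U_and _ _ H1 H2)). intros m [Ha Hb']. apply Rabs_def1; lra.
Qed.

Lemma ulim_def a : exists A, (exists B, forall m, Rabs (a m) <= B) -> UL a A.
Proof.
  destruct (classic (exists B, forall m, Rabs (a m) <= B)) as [H|H].
  - destruct (ulim_ex a H) as [A HA]. exists A. auto.
  - exists 0. intros H'. contradiction.
Qed.

Definition ulim a := proj1_sig (constructive_indefinite_description _ (ulim_def a)).

Lemma ulim_spec a : (exists B, forall m, Rabs (a m) <= B) -> UL a (ulim a).
Proof. unfold ulim. destruct (constructive_indefinite_description _ (ulim_def a)). simpl. auto. Qed.

Definition hN (m : nat) := / INR (S (S m)).

Lemma hN_pos m : 0 < hN m.
Proof. unfold hN. apply Rinv_0_lt_compat, lt_0_INR. lia. Qed.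

Lemma hN_le1 m : hN m <= 1.
Proof.
  unfold hN. rewrite <- Rinv_1. apply Rinv_le_contravar. lra.
  rewrite !S_INR. pose proof (pos_INR m). lra.
Qed.

Lemma U_small K eps : 0 < eps -> U (fun m => K * hN m < eps).
Proof.
  intros He. destruct (INR_unbounded (Rabs K / eps)) as [n0 Hn0].
  apply (U_mono _ _ (U_cof n0)). intros m Hm.
  apply le_INR in Hm. unfold hN.
  assert (HI : 0 < INR (S (S m))) by (apply lt_0_INR; lia).
  assert (INR m < INR (S (S m))) by (rewrite !S_INR; lra).
  assert (Rabs K / eps < INR (S (S m))) by lra.
  assert (K <= Rabs K) by apply RRle_abs.
  apply (Rmult_lt_reg_r (INR (S (S m)))); auto.
  rewrite Rmult_assoc, Rinv_l by lra. rewrite Rmult_1_r.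
  assert (Rabs K < eps * INR (S (S m))).
  { apply (Rmult_lt_reg_r (/ eps)). apply Rinv_0_lt_compat; lra.
    replace (eps * INR (S (S m)) * / eps) with (INR (S (S m))) by (field; lra). exact H0. }
  lra.
Qed.

Lemma UL_le a A B K : UL a A -> U (fun m => a m <= B + K * hN m) -> A <= B.
Proof.
  intros HA HB. destruct (Rle_lt_dec A B) as [|Hlt]; auto. exfalso.
  set (e := (A - B) / 2).
  assert (He : 0 < e) by (unfold e; lra).
  destruct (U_ex _ (U_and _ _ (U_and _ _ (HA e He) HB) (U_small K e He))) as [m [[H1 H2] H3]].
  apply Rabs_def2 in H1. unfold e in *. lra.
Qed.

Lemma UL_ge a A B K : UL a A -> U (fun m => B - K * hN m <= a m) -> B <= A.
Proof.
  intros HA HB. destruct (Rle_lt_dec B A) as [|Hlt]; auto. exfalso.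
  set (e := (B - A) / 2).
  assert (He : 0 < e) by (unfold e; lra).
  destruct (U_ex _ (U_and _ _ (U_and _ _ (HA e He) HB) (U_small K e He))) as [m [[H1 H2] H3]].
  apply Rabs_def2 in H1. unfold e in *. lra.
Qed.

Lemma UL_const c : UL (fun _ => c) c.
Proof. intros e He. apply U_all. intros m. rewrite Rminus_diag, Rabs_R0. auto. Qed.

Lemma UL_lin a b A B al be : UL a A -> UL b B ->
  UL (fun m => al * a m + be * b m) (al * A + be * B).
Proof.
  intros HA HB e He.
  set (e' := e / (2 * (Rabs al + Rabs be + 1))).
  assert (He' : 0 < e').
  { unfold e'. apply Rdiv_lt_0_compat; auto. pose proof (Rabs_pos al). pose proof (Rabs_pos be). lra. }
  apply (U_mono _ _ (U_and _ _ (HA e' He') (HB e' He'))). intros m [H1 H2].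
  replace (al * a m + be * b m - (al * A + be * B)) with (al * (a m - A) + be * (b m - B)) by ring.
  eapply Rle_lt_trans. apply Rabs_triang. rewrite !Rabs_mult.
  pose proof (Rabs_pos al). pose proof (Rabs_pos be).
  assert (Rabs al * Rabs (a m - A) <= Rabs al * e') by (apply Rmult_le_compat_l; lra).
  assert (Rabs be * Rabs (b m - B) <= Rabs be * e') by (apply Rmult_le_compat_l; lra).
  assert ((Rabs al + Rabs be) * e' < e).
  { unfold e'. replace ((Rabs al + Rabs be) * (e / (2 * (Rabs al + Rabs be + 1))))
      with (e * ((Rabs al + Rabs be) / (2 * (Rabs al + Rabs be + 1)))) by (field; lra).
    assert ((Rabs al + Rabs be) / (2 * (Rabs al + Rabs be + 1)) < 1).
    { apply (Rmult_lt_reg_r (2 * (Rabs al + Rabs be + 1))). lra.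
      unfold Rdiv. rewrite Rmult_assoc, Rinv_l by lra. lra. }
    nra. }
  lra.
Qed.

Lemma UL_abs a A : UL a A -> UL (fun m => Rabs (a m)) (Rabs A).
Proof.
  intros HA e He. apply (U_mono _ _ (HA e He)). intros m H.
  eapply Rle_lt_trans. apply Rabs_triang_inv2. auto.
Qed.

Lemma box_bounded (F : R -> R -> R) a b c e :
  (forall t y, a <= t <= b -> c <= y <= e -> forall eps, 0 < eps -> exists del, 0 < del /\
     forall t' y', a <= t' <= b -> c <= y' <= e -> Rabs (t' - t) < del -> Rabs (y' - y) < del ->
     Rabs (F t' y' - F t y) < eps) ->
  a <= b -> c <= e ->
  exists B, forall t y, a <= t <= b -> c <= y <= e -> F t y <= B.
Proof.
  intros Hc Hab Hce. apply NNPP. intros Hn.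
  assert (Hs : forall n : nat, exists ty : R * R, a <= fst ty <= b /\ c <= snd ty <= e /\ INR n < F (fst ty) (snd ty)).
  { intros n. apply NNPP. intros Hn2. apply Hn. exists (INR n). intros t y Ht Hy.
    destruct (Rle_lt_dec (F t y) (INR n)) as [|Hlt]; auto. exfalso. apply Hn2.
    exists (t, y). simpl. auto. }
  set (tq := fun n => fst (proj1_sig (constructive_indefinite_description _ (Hs n)))).
  set (yq := fun n => snd (proj1_sig (constructive_indefinite_description _ (Hs n)))).
  assert (Hq : forall n, a <= tq n <= b /\ c <= yq n <= e /\ INR n < F (tq n) (yq n)).
  { intros n. unfold tq, yq. destruct (constructive_indefinite_description _ (Hs n)). simpl. auto. }
  assert (HT : UL tq (ulim tq)).
  { apply ulim_spec. exists (Rabs a + Rabs b). intros m. destruct (Hq m) as [H1 _].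
    apply Rabs_le. split. pose proof (Rabs_pos b). pose proof (Rabs_le_inv a (Rabs a) (Rle_refl _)). lra.
    pose proof (Rabs_pos a). pose proof (Rabs_le_inv b (Rabs b) (Rle_refl _)). lra. }
  assert (HY : UL yq (ulim yq)).
  { apply ulim_spec. exists (Rabs c + Rabs e). intros m. destruct (Hq m) as [_ [H1 _]].
    apply Rabs_le. split. pose proof (Rabs_pos e). pose proof (Rabs_le_inv c (Rabs c) (Rle_refl _)). lra.
    pose proof (Rabs_pos c). pose proof (Rabs_le_inv e (Rabs e) (Rle_refl _)). lra. }
  set (T := ulim tq) in *. set (Y := ulim yq) in *.
  assert (HTb : a <= T <= b).
  { split. apply (UL_ge tq T a 0 HT). apply U_all. intros m. destruct (Hq m) as [H1 _]. lra.
    apply (UL_le tq T b 0 HT). apply U_all. intros m. destruct (Hq m) as [H1 _]. lra. }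
  assert (HYb : c <= Y <= e).
  { split. apply (UL_ge yq Y c 0 HY). apply U_all. intros m. destruct (Hq m) as [_ [H1 _]]. lra.
    apply (UL_le yq Y e 0 HY). apply U_all. intros m. destruct (Hq m) as [_ [H1 _]]. lra. }
  destruct (Hc T Y HTb HYb 1 ltac:(lra)) as [del [Hdel Hd]].
  destruct (INR_unbounded (F T Y + 1)) as [n0 Hn0].
  destruct (U_ex _ (U_and _ _ (U_and _ _ (HT del Hdel) (HY del Hdel)) (U_cof n0))) as [m [[H1 H2] H3]].
  destruct (Hq m) as [Ht [Hy Hf]].
  pose proof (Hd (tq m) (yq m) Ht Hy H1 H2) as Hf2. apply Rabs_def2 in Hf2.
  apply le_INR in H3. lra.
Qed.

Lemma pos_min (q : R -> R) :
  (forall t, 0 <= t <= 1 -> forall eps, 0 < eps -> exists del, 0 < del /\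
     forall t', 0 <= t' <= 1 -> Rabs (t' - t) < del -> Rabs (q t' - q t) < eps) ->
  (forall t, 0 <= t <= 1 -> 0 < q t) ->
  exists mq, 0 < mq /\ forall t, 0 <= t <= 1 -> mq <= q t.
Proof.
  intros Hc Hpos. apply NNPP. intros Hn.
  assert (Hs : forall n : nat, exists t, 0 <= t <= 1 /\ q t < / INR (S n)).
  { intros n. apply NNPP. intros Hn2. apply Hn. exists (/ INR (S n)). split.
    apply Rinv_0_lt_compat, lt_0_INR; lia.
    intros t Ht. destruct (Rle_lt_dec (/ INR (S n)) (q t)) as [|Hlt]; auto. exfalso. apply Hn2.
    exists t. auto. }
  set (tq := fun n => proj1_sig (constructive_indefinite_description _ (Hs n))).
  assert (Hq : forall n, 0 <= tq n <= 1 /\ q (tq n) < / INR (S n)).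
  { intros n. unfold tq. destruct (constructive_indefinite_description _ (Hs n)). simpl. auto. }
  assert (HT : UL tq (ulim tq)).
  { apply ulim_spec. exists 1. intros m. destruct (Hq m) as [H1 _]. apply Rabs_le. lra. }
  set (T := ulim tq) in *.
  assert (HTb : 0 <= T <= 1).
  { split. apply (UL_ge tq T 0 0 HT). apply U_all. intros m. destruct (Hq m) as [H1 _]. lra.
    apply (UL_le tq T 1 0 HT). apply U_all. intros m. destruct (Hq m) as [H1 _]. lra. }
  pose proof (Hpos T HTb) as HqT.
  destruct (Hc T HTb (q T / 2) ltac:(lra)) as [del [Hdel Hd]].
  destruct (INR_unbounded (2 / q T)) as [n0 Hn0].
  destruct (U_ex _ (U_and _ _ (HT del Hdel) (U_cof n0))) as [m [H1 H3]].
  destruct (Hq m) as [Ht Hf].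
  pose proof (Hd (tq m) Ht H1) as Hf2. apply Rabs_def2 in Hf2.
  apply le_INR in H3.
  assert (INR n0 < INR (S m)) by (rewrite S_INR; lra).
  assert (/ INR (S m) < q T / 2).
  { assert (HI : 0 < INR (S m)) by (apply lt_0_INR; lia).
    apply (Rmult_lt_reg_r (INR (S m))); auto. rewrite Rinv_l by lra.
    assert (2 / q T * q T = 2) by (field; lra).
    assert (2 / q T * q T < INR (S m) * q T) by (apply Rmult_lt_compat_r; lra).
    lra. }
  lra.
Qed.

End UF.

Section Pass.
Variable U : (nat -> Prop) -> Prop.
Hypothesis U_mono : forall A B : nat -> Prop, U A -> (forall n, A n -> B n) -> U B.
Hypothesis U_and : forall A B : nat -> Prop, U A -> U B -> U (fun n => A n /\ B n).
Hypothesis U_ne : ~ U (fun _ => False).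
Hypothesis U_cof : forall N, U (fun n => (N <= n)%nat).

Lemma pass3 a b c A B C0 al Kb K : UL U a A -> UL U b B -> UL U c C0 ->
  U (fun m => Rabs (a m - b m - al * c m) <= Kb + K * hN m) ->
  Rabs (A - B - al * C0) <= Kb.
Proof.
  intros HA HB HC HU.
  assert (H1 : UL U (fun m => 1 * a m + (-1) * b m) (1 * A + (-1) * B)) by (apply UL_lin; auto).
  assert (H2 : UL U (fun m => 1 * (1 * a m + (-1) * b m) + (- al) * c m) (1 * (1 * A + (-1) * B) + (- al) * C0)) by (apply UL_lin; auto).
  apply UL_abs in H2; auto.
  apply (UL_le U U_mono U_and U_ne U_cof _ _ Kb K) in H2.
  - replace (A - B - al * C0) with (1 * (1 * A + -1 * B) + - al * C0) by ring. exact H2.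
  - apply (U_mono _ _ HU). intros m Hm.
    replace (1 * (1 * a m + -1 * b m) + - al * c m) with (a m - b m - al * c m) by ring. exact Hm.
Qed.
End Pass.

Definition kk (N : nat) (t : R) : nat := Z.to_nat (Int_part (t * INR N)).

Lemma kk_spec N t : (1 <= N)%nat -> 0 <= t <= 1 ->
  (kk N t <= N)%nat /\ INR (kk N t) <= t * INR N /\ t * INR N < INR (kk N t) + 1.
Proof.
  intros HN Ht. unfold kk. destruct (base_Int_part (t * INR N)) as [H1 H2].
  assert (HNp : 0 < INR N) by (apply lt_0_INR; lia).
  assert (Hz : (0 <= Int_part (t * INR N))%Z).
  { assert (IZR (-1) < IZR (Int_part (t * INR N))) by (assert (0 <= t * INR N) by nra; lra).
    apply lt_IZR in H. lia. }
  assert (HI : INR (Z.to_nat (Int_part (t * INR N))) = IZR (Int_part (t * INR N)))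
    by (rewrite INR_IZR_INZ, Z2Nat.id by exact Hz; reflexivity).
  rewrite HI. split; [|split; lra].
  apply INR_le. rewrite HI. nra.
Qed.

Lemma Rabs_divN a n : 0 < n -> Rabs a / n = Rabs (a / n).
Proof. intros H. unfold Rdiv. rewrite Rabs_mult, (Rabs_right (/ n)). reflexivity.
  apply Rle_ge, Rlt_le, Rinv_0_lt_compat; auto. Qed.

Lemma grid N t : (1 <= N)%nat -> 0 <= t <= 1 ->
  INR (kk N t) / INR N <= t < INR (kk N t) / INR N + / INR N.
Proof.
  intros HN Ht. destruct (kk_spec N t HN Ht) as [_ [H1 H2]].
  assert (HNp : 0 < INR N) by (apply lt_0_INR; lia).
  split.
  - apply (Rmult_le_reg_r (INR N)); auto. unfold Rdiv. rewrite Rmult_assoc, Rinv_l by lra. lra.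
  - apply (Rmult_lt_reg_r (INR N)); auto. rewrite Rmult_plus_distr_r. unfold Rdiv.
    rewrite Rmult_assoc, Rinv_l by lra. lra.
Qed.

Lemma deriv_from_est f x l :
  (forall eps, 0 < eps -> exists del, 0 < del /\ forall y, Rabs (y - x) < del ->
     Rabs (f y - f x - (y - x) * l) <= eps * Rabs (y - x)) ->
  derivable_pt_lim f x l.
Proof.
  intros H eps Heps. destruct (H (eps / 2) ltac:(lra)) as [del [Hdel Hd]].
  exists (mkposreal del Hdel). intros h Hh0 Hh. simpl in Hh.
  pose proof (Hd (x + h) ltac:(replace (x + h - x) with h by ring; exact Hh)) as Q.
  replace (x + h - x) with h in Q by ring.
  assert (Hpos : 0 < Rabs h) by (apply Rabs_pos_lt; auto).
  replace ((f (x + h) - f x) / h - l) with ((f (x + h) - f x - h * l) / h) by (field; auto).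
  unfold Rdiv. rewrite Rabs_mult, Rabs_inv.
  apply (Rmult_lt_reg_r (Rabs h)); auto. rewrite Rmult_assoc, Rinv_l by lra. nra.
Qed.

Lemma cont_pt_of_eps f x :
  (forall eps, 0 < eps -> exists del, 0 < del /\ forall y, Rabs (y - x) < del -> Rabs (f y - f x) < eps) ->
  continuity_pt f x.
Proof.
  intros H eps Heps. destruct (H eps Heps) as [del [Hdel Hd]].
  exists del. split; auto. intros y [_ Hy]. simpl in *. unfold R_dist in *. apply Hd; auto.
Qed.

Section CoreS.
Variable U : (nat -> Prop) -> Prop.
Hypothesis Um : forall A B : nat -> Prop, U A -> (forall n, A n -> B n) -> U B.
Hypothesis Ua : forall A B : nat -> Prop, U A -> U B -> U (fun n => A n /\ B n).
Hypothesis Un : ~ U (fun _ => False).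
Hypothesis Uu : forall A : nat -> Prop, U A \/ U (fun n => ~ A n).
Hypothesis Uc : forall N, U (fun n => (N <= n)%nat).

Variable G : R -> R -> R.
Variables Rb Gm lam d M : R.
Hypothesis HG0 : forall t y, 0 <= G t y.
Hypothesis HGc2 : forall t y eps, 0 < eps -> exists del, 0 < del /\
  forall t' y', Rabs (t' - t) < del -> Rabs (y' - y) < del -> Rabs (G t' y' - G t y) < eps.
Hypothesis HGb : forall t y, y <= Rb -> G t y <= Gm.
Hypothesis HGm : 0 < Gm.
Hypothesis HRb : 0 < Rb.
Hypothesis Hlam : 0 < lam.
Hypothesis HlamG : lam * Gm < Rb.
Hypothesis HM : 16 < lam * M.
Hypothesis Hd : forall t y, 0 < t < 1 -> 0 < y < d -> M * y <= G t y.
Hypothesis Hd0 : 0 < d.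
Hypothesis HdR : d <= Rb.

Lemma HGc1 : forall t, continuity (G t).
Proof.
  intros t y. apply cont_pt_of_eps. intros eps Heps.
  destruct (HGc2 t y eps Heps) as [del [Hdel H]]. exists del. split; auto.
  intros y' Hy'. apply H; auto. rewrite Rminus_diag, Rabs_R0. auto.
Qed.

Lemma two_le m : (2 <= S (S m))%nat. Proof. lia. Qed.
Lemma one_le m : (1 <= S (S m))%nat. Proof. lia. Qed.

Definition sm (m : nat) : R :=
  proj1_sig (shoot G (S (S m)) lam Rb Gm d M HG0 HGc1 HGb (two_le m) Hlam HlamG HM Hd Hd0 HdR).

Lemma sm_spec m : d / 2 <= sm m <= Rb /\ sx G (S (S m)) lam (sm m) (S (S m)) = 0.
Proof. unfold sm. destruct (shoot _ _ _ _ _ _ _ _ _ _ _ _ _ _ _ _ _). simpl. auto. Qed.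

Definition Xs m t := sx G (S (S m)) lam (sm m) (kk (S (S m)) t).
Definition Ps m t := sp G (S (S m)) lam (sm m) (kk (S (S m)) t).
Definition uu t := ulim U Um Ua Un Uu Uc (fun m => Xs m t).
Definition vv t := ulim U Um Ua Un Uu Uc (fun m => Ps m t).

Definition CC := Rb + lam * Gm.
Lemma CC_pos : 0 < CC.
Proof. unfold CC. assert (0 < lam * Gm) by (apply Rmult_lt_0_compat; auto). lra. Qed.

Lemma sm_s m : 0 <= sm m <= Rb.
Proof. destruct (sm_spec m). lra. Qed.

Lemma NN_pos m : 0 < INR (S (S m)).
Proof. apply lt_0_INR. lia. Qed.

Lemma kk_le m t : 0 <= t <= 1 -> (kk (S (S m)) t <= S (S m))%nat.
Proof. intros Ht. apply (kk_spec _ t (one_le m) Ht). Qed.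

Lemma L_x m t : 0 <= t <= 1 -> 0 <= Xs m t <= Rb /\
  d * (INR (kk (S (S m)) t) / INR (S (S m))) * (1 - INR (kk (S (S m)) t) / INR (S (S m))) <= Xs m t.
Proof.
  intros Ht. destruct (sm_spec m) as [Hs HN].
  destruct (sol_props G (S (S m)) lam Rb d M HG0 (two_le m) Hlam HM Hd Hd0 (sm m) Hs HN) as [A B].
  unfold Xs. split. apply A, kk_le; auto. apply B, kk_le; auto.
Qed.

Lemma L_p m t : 0 <= t <= 1 -> Rabs (Ps m t) <= CC.
Proof.
  intros Ht. unfold Ps, CC. apply (p_abs G (S (S m)) lam (sm m) HG0 (one_le m) Hlam Rb Gm HGb (sm_s m)).
  apply kk_le; auto.
Qed.

Lemma UX t : 0 <= t <= 1 -> UL U (fun m => Xs m t) (uu t).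
Proof.
  intros Ht. apply ulim_spec. exists Rb. intros m. destruct (L_x m t Ht) as [A _].
  apply Rabs_le. lra.
Qed.

Lemma UP t : 0 <= t <= 1 -> UL U (fun m => Ps m t) (vv t).
Proof. intros Ht. apply ulim_spec. exists CC. intros m. apply L_p; auto. Qed.

Lemma grid_m m t : 0 <= t <= 1 ->
  INR (kk (S (S m)) t) / INR (S (S m)) <= t < INR (kk (S (S m)) t) / INR (S (S m)) + hN m.
Proof. intros Ht. apply grid; auto. lia. Qed.

Lemma diff_m m t y : 0 <= t <= 1 -> 0 <= y <= 1 ->
  Rabs ((INR (kk (S (S m)) y) - INR (kk (S (S m)) t)) / INR (S (S m)) - (y - t)) <= hN m.
Proof.
  intros Ht Hy. pose proof (grid_m m t Ht). pose proof (grid_m m y Hy).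
  pose proof (NN_pos m).
  replace ((INR (kk (S (S m)) y) - INR (kk (S (S m)) t)) / INR (S (S m)))
    with (INR (kk (S (S m)) y) / INR (S (S m)) - INR (kk (S (S m)) t) / INR (S (S m))) by (field; lra).
  apply Rabs_le. lra.
Qed.

Lemma diff_abs m t y : 0 <= t <= 1 -> 0 <= y <= 1 ->
  Rabs (INR (kk (S (S m)) y) - INR (kk (S (S m)) t)) / INR (S (S m)) <= Rabs (y - t) + hN m.
Proof.
  intros Ht Hy. rewrite Rabs_divN by apply NN_pos. pose proof (diff_m m t y Ht Hy).
  set (a := (INR (kk (S (S m)) y) - INR (kk (S (S m)) t)) / INR (S (S m))) in *.
  replace a with ((a - (y - t)) + (y - t)) by ring.
  eapply Rle_trans. apply Rabs_triang. lra.
Qed.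

Lemma u_bounds t : 0 <= t <= 1 -> d * t * (1 - t) <= uu t <= Rb.
Proof.
  intros Ht. split.
  - apply (UL_ge U Um Ua Un Uc _ _ _ d (UX t Ht)). apply U_all; auto. intros m.
    destruct (L_x m t Ht) as [_ B]. pose proof (grid_m m t Ht). pose proof (hN_pos m). pose proof (hN_le1 m).
    set (r := INR (kk (S (S m)) t) / INR (S (S m))) in *.
    assert (r * (1 - r) - t * (1 - t) >= - hN m).
    { replace (r * (1 - r) - t * (1 - t)) with ((t - r) * (r + t - 1)) by ring.
      assert (0 <= r) by (unfold r; apply Rmult_le_pos; [apply pos_INR| apply Rlt_le, Rinv_0_lt_compat, NN_pos]).
      nra. }
    assert (d * (r * (1 - r) - t * (1 - t)) >= d * (- hN m)) by (apply Rmult_ge_compat_l; lra).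
    nra.
  - apply (UL_le U Um Ua Un Uc _ _ _ 0 (UX t Ht)). apply U_all; auto. intros m.
    destruct (L_x m t Ht) as [A _]. lra.
Qed.

Lemma u0 : uu 0 = 0.
Proof.
  assert (H0 : forall m, Xs m 0 = 0).
  { intros m. unfold Xs. replace (kk (S (S m)) 0) with 0%nat. reflexivity.
    destruct (kk_spec (S (S m)) 0 (one_le m) ltac:(lra)) as [_ [A _]].
    rewrite Rmult_0_l in A. pose proof (pos_INR (kk (S (S m)) 0)).
    assert (INR (kk (S (S m)) 0) = 0) by lra. symmetry. apply INR_eq. simpl. lra. }
  assert (Ht : 0 <= 0 <= 1) by lra.
  apply Rle_antisym.
  - apply (UL_le U Um Ua Un Uc _ _ _ 0 (UX 0 Ht)). apply U_all; auto. intros m. rewrite H0. lra.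
  - apply (UL_ge U Um Ua Un Uc _ _ _ 0 (UX 0 Ht)). apply U_all; auto. intros m. rewrite H0. lra.
Qed.

Lemma u1 : uu 1 = 0.
Proof.
  assert (H0 : forall m, Xs m 1 = 0).
  { intros m. unfold Xs. replace (kk (S (S m)) 1) with (S (S m)). apply sm_spec.
    destruct (kk_spec (S (S m)) 1 (one_le m) ltac:(lra)) as [A [B C]].
    rewrite Rmult_1_l in B, C.
    assert (INR (S (S m)) < INR (S (kk (S (S m)) 1))) by (rewrite (S_INR (kk (S (S m)) 1)); lra).
    apply INR_lt in H. lia. }
  assert (Ht : 0 <= 1 <= 1) by lra.
  apply Rle_antisym.
  - apply (UL_le U Um Ua Un Uc _ _ _ 0 (UX 1 Ht)). apply U_all; auto. intros m. rewrite H0. lra.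
  - apply (UL_ge U Um Ua Un Uc _ _ _ 0 (UX 1 Ht)). apply U_all; auto. intros m. rewrite H0. lra.
Qed.

Lemma u_lip t y : 0 <= t <= 1 -> 0 <= y <= 1 -> Rabs (uu y - uu t) <= CC * Rabs (y - t).
Proof.
  intros Ht Hy.
  replace (uu y - uu t) with (uu y - uu t - 0 * 0) by ring.
  apply (pass3 U Um Ua Un Uc (fun m => Xs m y) (fun m => Xs m t) (fun _ => 0) _ _ _ 0 _ CC (UX y Hy) (UX t Ht) (UL_const U Um Uc 0)).
  apply U_all; auto. intros m. replace (Xs m y - Xs m t - 0 * 0) with (Xs m y - Xs m t) by ring.
  unfold Xs. eapply Rle_trans.
  apply (x_lip_abs G (S (S m)) lam (sm m) HG0 (one_le m) Hlam Rb Gm HGb (sm_s m)); apply kk_le; auto.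
  fold CC. pose proof (diff_abs m t y Ht Hy). pose proof CC_pos.
  assert (CC * (Rabs (INR (kk (S (S m)) y) - INR (kk (S (S m)) t)) / INR (S (S m))) <= CC * (Rabs (y - t) + hN m))
    by (apply Rmult_le_compat_l; lra).
  lra.
Qed.

Lemma u_taylor t y : 0 <= t <= 1 -> 0 <= y <= 1 ->
  Rabs (uu y - uu t - (y - t) * vv t) <= lam * Gm * (y - t) ^ 2.
Proof.
  intros Ht Hy.
  apply (pass3 U Um Ua Un Uc (fun m => Xs m y) (fun m => Xs m t) (fun m => Ps m t) _ _ _ _ _ (3 * (lam * Gm) + CC) (UX y Hy) (UX t Ht) (UP t Ht)).
  apply U_all; auto. intros m.
  pose proof (x_taylor_abs G (S (S m)) lam (sm m) HG0 (one_le m) Hlam Rb Gm HGb (sm_s m)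
     (kk (S (S m)) t) (kk (S (S m)) y) (kk_le m t Ht) (kk_le m y Hy)) as T.
  fold (Xs m t) (Xs m y) (Ps m t) in T.
  pose proof (diff_m m t y Ht Hy) as D. pose proof (L_p m t Ht) as P.
  set (dk := (INR (kk (S (S m)) y) - INR (kk (S (S m)) t)) / INR (S (S m))) in *.
  set (e := dk - (y - t)) in *.
  pose proof (hN_pos m). pose proof (hN_le1 m).
  assert (Hyt : Rabs (y - t) <= 1) by (apply Rabs_le; lra).
  replace (Xs m y - Xs m t - (y - t) * Ps m t) with ((Xs m y - Xs m t - dk * Ps m t) + e * Ps m t) by (unfold e; ring).
  eapply Rle_trans. apply Rabs_triang. rewrite Rabs_mult.
  assert (Rabs e * Rabs (Ps m t) <= hN m * CC) by (apply Rmult_le_compat; auto; apply Rabs_pos).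
  assert (dk ^ 2 <= (y - t) ^ 2 + 3 * hN m).
  { replace dk with ((y - t) + e) by (unfold e; ring).
    apply Rabs_le_inv in D. apply Rabs_le_inv in Hyt. nra. }
  assert (0 <= lam * Gm) by (apply Rmult_le_pos; lra).
  assert (lam * Gm * dk ^ 2 <= lam * Gm * ((y - t) ^ 2 + 3 * hN m)) by (apply Rmult_le_compat_l; auto).
  nra.
Qed.


Lemma v_est t eps : 0 < t < 1 -> 0 < eps -> exists del, 0 < del /\ forall y, Rabs (y - t) < del ->
  Rabs (vv y - vv t - (y - t) * (- lam * G t (uu t))) <= lam * eps * Rabs (y - t).
Proof.
  intros Ht He. set (Gs := G t (uu t)).
  destruct (HGc2 t (uu t) eps He) as [d1 [Hd1 Hc]].
  pose proof CC_pos as HC.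
  exists (Rmin (d1 / (2 * (CC + 1))) (Rmin t (1 - t))). split.
  { apply Rmin_glb_lt. apply Rdiv_lt_0_compat; lra. apply Rmin_glb_lt; lra. }
  intros y Hy.
  assert (Hy1 : Rabs (y - t) < d1 / (2 * (CC + 1))) by (eapply Rlt_le_trans; [exact Hy| apply Rmin_l]).
  assert (Hy2 : Rabs (y - t) < Rmin t (1 - t)) by (eapply Rlt_le_trans; [exact Hy| apply Rmin_r]).
  assert (Hy01 : 0 <= y <= 1).
  { pose proof (Rmin_l t (1 - t)). pose proof (Rmin_r t (1 - t)). apply Rabs_def2 in Hy2. lra. }
  assert (Ht01 : 0 <= t <= 1) by lra.
  assert (Hyd : CC * Rabs (y - t) <= d1 / 2).
  { assert (CC * Rabs (y - t) <= (CC + 1) * (d1 / (2 * (CC + 1)))).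
    { apply Rmult_le_compat; try lra. apply Rabs_pos. }
    replace ((CC + 1) * (d1 / (2 * (CC + 1)))) with (d1 / 2) in H by (field; lra). lra. }
  assert (Hyd' : Rabs (y - t) <= d1 / 2).
  { assert (d1 / (2 * (CC + 1)) <= d1 / 2).
    { apply Rmult_le_compat_l; [lra|]. apply Rinv_le_contravar; lra. }
    lra. }
  replace ((y - t) * (- lam * Gs)) with (((y - t) * (- lam * Gs)) * 1) by ring.
  apply (pass3 U Um Ua Un Uc (fun m => Ps m y) (fun m => Ps m t) (fun _ => 1) _ _ 1 _ _ (lam * eps + lam * Rabs Gs) (UP y Hy01) (UP t Ht01) (UL_const U Um Uc 1)).
  apply (Um _ _ (Ua _ _ (U_small U Um Uc (CC + 1) (d1 / 4) ltac:(lra)) (UX t Ht01 (d1 / 4) ltac:(lra)))).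
  intros m [Hm1 Hm2]. rewrite Rmult_1_r.
  pose proof (hN_pos m) as Hh. pose proof (NN_pos m) as HN.
  pose proof (grid_m m t Ht01) as Gt. pose proof (grid_m m y Hy01) as Gy.
  set (N := S (S m)) in *.
  set (k := kk N t) in *. set (k' := kk N y) in *.
  assert (Hk : (k <= N)%nat) by (apply kk_le; auto).
  assert (Hk' : (k' <= N)%nat) by (apply kk_le; auto).
  assert (Hl : forall l, ((k < l)%nat /\ (l <= k')%nat) \/ ((k' < l)%nat /\ (l <= k)%nat) ->
     Rabs (G (INR l / INR N) (sx G N lam (sm m) l) - Gs) <= eps).
  { intros l Hlr.
    assert (HlN : (l <= N)%nat) by lia.
    assert (Hb : Rabs (INR l / INR N - t) <= Rabs (y - t) + hN m /\
                 Rabs (INR l - INR k) / INR N <= Rabs (y - t) + hN m).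
    { rewrite Rabs_divN by lra.
      replace ((INR l - INR k) / INR N) with (INR l / INR N - INR k / INR N) by (field; lra).
      destruct Hlr as [[A B]|[A B]].
      - apply lt_INR in A. apply le_INR in B.
        assert (INR k / INR N < INR l / INR N) by (apply Rmult_lt_compat_r; [apply Rinv_0_lt_compat|]; lra).
        assert (INR l / INR N <= INR k' / INR N) by (apply Rmult_le_compat_r; [apply Rlt_le, Rinv_0_lt_compat|]; lra).
        pose proof (Rabs_pos (y - t)). split; apply Rabs_le; (assert (y - t <= Rabs (y - t)) by apply RRle_abs); lra.
      - apply lt_INR in A. apply le_INR in B.
        assert (INR k' / INR N < INR l / INR N) by (apply Rmult_lt_compat_r; [apply Rinv_0_lt_compat|]; lra).
        assert (INR l / INR N <= INR k / INR N) by (apply Rmult_le_compat_r; [apply Rlt_le, Rinv_0_lt_compat|]; lra).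
        pose proof (Rabs_pos (y - t)). split; apply Rabs_le; (assert (- (y - t) <= Rabs (y - t)) by (rewrite <- Rabs_Ropp; apply RRle_abs)); lra. }
    destruct Hb as [Hb1 Hb2].
    apply Rlt_le. apply Hc.
    - assert (hN m <= (CC + 1) * hN m) by nra. lra.
    - pose proof (x_lip_abs G N lam (sm m) HG0 (one_le m) Hlam Rb Gm HGb (sm_s m) k l Hk HlN) as XL.
      fold CC in XL. change (sx G N lam (sm m) k) with (Xs m t) in XL.
      assert (CC * (Rabs (INR l - INR k) / INR N) <= CC * (Rabs (y - t) + hN m)) by (apply Rmult_le_compat_l; lra).
      replace (sx G N lam (sm m) l - uu t) with ((sx G N lam (sm m) l - Xs m t) + (Xs m t - uu t)) by ring.
      eapply Rle_lt_trans. apply Rabs_triang.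
      assert (CC * hN m < d1 / 4) by (pose proof (Rmult_le_compat_r (hN m) CC (CC + 1) ltac:(lra) ltac:(lra)); lra).
      lra. }
  pose proof (p_cont_abs G N lam (sm m) (one_le m) Hlam k k' eps Gs Hl) as PC.
  change (sp G N lam (sm m) k) with (Ps m t) in PC. change (sp G N lam (sm m) k') with (Ps m y) in PC.
  pose proof (diff_m m t y Ht01 Hy01) as D. fold N k k' in D.
  pose proof (diff_abs m t y Ht01 Hy01) as DA. fold N k k' in DA.
  set (dk := (INR k' - INR k) / INR N) in *.
  replace (Ps m y - Ps m t - (y - t) * (- lam * Gs)) with
    ((Ps m y - Ps m t + lam * dk * Gs) + lam * Gs * ((y - t) - dk)) by ring.
  eapply Rle_trans. apply Rabs_triang. rewrite !Rabs_mult.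
  rewrite (Rabs_right lam) by lra.
  assert (lam * (Rabs (INR k' - INR k) / INR N) * eps <= lam * (Rabs (y - t) + hN m) * eps).
  { apply Rmult_le_compat_r; [lra|]. apply Rmult_le_compat_l; lra. }
  assert (Rabs (y - t - dk) <= hN m) by (rewrite Rabs_minus_sym; exact D).
  assert (lam * Rabs Gs * Rabs (y - t - dk) <= lam * Rabs Gs * hN m).
  { apply Rmult_le_compat_l; [apply Rmult_le_pos; [lra| apply Rabs_pos]| auto]. }
  nra.
Qed.

Lemma u_deriv t : 0 < t < 1 -> derivable_pt_lim uu t (vv t).
Proof.
  intros Ht. apply deriv_from_est. intros eps He.
  assert (HlG : 0 < lam * Gm) by (apply Rmult_lt_0_compat; lra).
  exists (Rmin (eps / (lam * Gm)) (Rmin t (1 - t))). split.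
  { apply Rmin_glb_lt. apply Rdiv_lt_0_compat; lra. apply Rmin_glb_lt; lra. }
  intros y Hy.
  assert (Hy1 : Rabs (y - t) < eps / (lam * Gm)) by (eapply Rlt_le_trans; [exact Hy| apply Rmin_l]).
  assert (Hy2 : Rabs (y - t) < Rmin t (1 - t)) by (eapply Rlt_le_trans; [exact Hy| apply Rmin_r]).
  assert (Hy01 : 0 <= y <= 1).
  { pose proof (Rmin_l t (1 - t)). pose proof (Rmin_r t (1 - t)). apply Rabs_def2 in Hy2. lra. }
  eapply Rle_trans. apply u_taylor; lra.
  assert (Hsq : (y - t) ^ 2 = Rabs (y - t) * Rabs (y - t)). { rewrite <- Rabs_mult. rewrite Rabs_right. ring. pose proof (Rle_0_sqr (y - t)). unfold Rsqr in *. lra. } rewrite Hsq.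
  assert (lam * Gm * Rabs (y - t) <= eps).
  { apply (Rmult_lt_compat_l (lam * Gm)) in Hy1; auto.
    replace (lam * Gm * (eps / (lam * Gm))) with eps in Hy1 by (field; lra). lra. }
  pose proof (Rabs_pos (y - t)). nra.
Qed.

Lemma v_deriv t : 0 < t < 1 -> derivable_pt_lim vv t (- lam * G t (uu t)).
Proof.
  intros Ht. apply deriv_from_est. intros eps He.
  destruct (v_est t (eps / lam) Ht ltac:(apply Rdiv_lt_0_compat; lra)) as [del [Hdel H]].
  exists del. split; auto. intros y Hy. eapply Rle_trans. apply H; auto.
  replace (lam * (eps / lam)) with eps by (field; lra). lra.
Qed.

Lemma Gu_cont t : 0 < t < 1 -> continuity_pt (fun y => G y (uu y)) t.
Proof.
  intros Ht. apply cont_pt_of_eps. intros eps He.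
  destruct (HGc2 t (uu t) eps He) as [d1 [Hd1 Hc]].
  pose proof CC_pos.
  exists (Rmin (d1 / (CC + 1)) (Rmin t (1 - t))). split.
  { apply Rmin_glb_lt. apply Rdiv_lt_0_compat; lra. apply Rmin_glb_lt; lra. }
  intros y Hy.
  assert (Hy1 : Rabs (y - t) < d1 / (CC + 1)) by (eapply Rlt_le_trans; [exact Hy| apply Rmin_l]).
  assert (Hy2 : Rabs (y - t) < Rmin t (1 - t)) by (eapply Rlt_le_trans; [exact Hy| apply Rmin_r]).
  assert (Hy01 : 0 <= y <= 1).
  { pose proof (Rmin_l t (1 - t)). pose proof (Rmin_r t (1 - t)). apply Rabs_def2 in Hy2. lra. }
  apply Hc.
  - assert (d1 / (CC + 1) <= d1).
    { unfold Rdiv. rewrite <- (Rmult_1_r d1) at 2. apply Rmult_le_compat_l; [lra|].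
      rewrite <- Rinv_1. apply Rinv_le_contravar; lra. }
    lra.
  - pose proof (u_lip t y ltac:(lra) Hy01).
    assert (CC * Rabs (y - t) < d1).
    { assert (CC * Rabs (y - t) <= (CC + 1) * Rabs (y - t)) by (pose proof (Rabs_pos (y - t)); nra).
      apply (Rmult_lt_compat_l (CC + 1)) in Hy1; [|lra].
      replace ((CC + 1) * (d1 / (CC + 1))) with d1 in Hy1 by (field; lra). lra. }
    lra.
Qed.

Lemma uu_cont01 : forall x, 0 <= x <= 1 -> forall eps, 0 < eps -> exists delta, 0 < delta /\
    forall y, 0 <= y <= 1 -> Rabs (y - x) < delta -> Rabs (uu y - uu x) < eps.
Proof.
  intros x Hx eps He. pose proof CC_pos. exists (eps / (CC + 1)). split.
  apply Rdiv_lt_0_compat; lra.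
  intros y Hy Hyx. eapply Rle_lt_trans. apply u_lip; auto.
  assert (CC * Rabs (y - x) <= (CC + 1) * Rabs (y - x)) by (pose proof (Rabs_pos (y - x)); nra).
  apply (Rmult_lt_compat_l (CC + 1)) in Hyx; [|lra].
  replace ((CC + 1) * (eps / (CC + 1))) with eps in Hyx by (field; lra). lra.
Qed.

Lemma uu_pos t : 0 < t < 1 -> 0 < uu t.
Proof.
  intros Ht. destruct (u_bounds t ltac:(lra)) as [A _].
  assert (0 < d * t * (1 - t)) by (apply Rmult_lt_0_compat; [apply Rmult_lt_0_compat|]; lra).
  lra.
Qed.


Lemma core_exists : exists u v : R -> R,
  (forall x, 0 <= x <= 1 -> forall eps, 0 < eps -> exists delta, 0 < delta /\
    forall y, 0 <= y <= 1 -> Rabs (y - x) < delta -> Rabs (u y - u x) < eps) /\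
  u 0 = 0 /\ u 1 = 0 /\ (forall t, 0 < t < 1 -> 0 < u t) /\ (forall t, 0 <= t <= 1 -> u t <= Rb) /\
  (forall t, 0 < t < 1 -> derivable_pt_lim u t (v t)) /\
  (forall t, 0 < t < 1 -> derivable_pt_lim v t (- lam * G t (u t))) /\
  (forall t, 0 < t < 1 -> continuity_pt (fun y => G y (u y)) t).
Proof.
  exists uu, vv. split; [exact uu_cont01|]. split; [exact u0|]. split; [exact u1|].
  split; [exact uu_pos|]. split; [intros t Ht; apply u_bounds; auto|].
  split; [exact u_deriv|]. split; [exact v_deriv|]. exact Gu_cont.
Qed.

End CoreS.

Theorem core_thm (U : (nat -> Prop) -> Prop)
  (Um : forall A B : nat -> Prop, U A -> (forall n, A n -> B n) -> U B)
  (Ua : forall A B : nat -> Prop, U A -> U B -> U (fun n => A n /\ B n))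
  (Un : ~ U (fun _ => False))
  (Uu : forall A : nat -> Prop, U A \/ U (fun n => ~ A n))
  (Uc : forall N, U (fun n => (N <= n)%nat))
  (G : R -> R -> R) (Rb : R) :
  0 < Rb ->
  (forall t y, 0 <= G t y) ->
  (forall t y eps, 0 < eps -> exists del, 0 < del /\
    forall t' y', Rabs (t' - t) < del -> Rabs (y' - y) < del -> Rabs (G t' y' - G t y) < eps) ->
  (exists Gm, forall t y, y <= Rb -> G t y <= Gm) ->
  (forall M, exists d, 0 < d /\ forall t y, 0 < t < 1 -> 0 < y < d -> M * y <= G t y) ->
  exists lamR, 0 < lamR /\ forall lam, 0 < lam -> lam < lamR ->
  exists u v : R -> R,
  (forall x, 0 <= x <= 1 -> forall eps, 0 < eps -> exists delta, 0 < delta /\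
    forall y, 0 <= y <= 1 -> Rabs (y - x) < delta -> Rabs (u y - u x) < eps) /\
  u 0 = 0 /\ u 1 = 0 /\ (forall t, 0 < t < 1 -> 0 < u t) /\ (forall t, 0 <= t <= 1 -> u t <= Rb) /\
  (forall t, 0 < t < 1 -> derivable_pt_lim u t (v t)) /\
  (forall t, 0 < t < 1 -> derivable_pt_lim v t (- lam * G t (u t))) /\
  (forall t, 0 < t < 1 -> continuity_pt (fun y => G y (u y)) t).
Proof.
  intros HRb HG0 HGc2 [Gm0 HGb0] Hm.
  set (Gm := Rmax Gm0 1).
  assert (HGm : 0 < Gm) by (unfold Gm; pose proof (Rmax_r Gm0 1); lra).
  assert (HGb : forall t y, y <= Rb -> G t y <= Gm).
  { intros t y Hy. pose proof (HGb0 t y Hy). pose proof (Rmax_l Gm0 1). unfold Gm. lra. }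
  exists (Rb / (2 * Gm)). split. apply Rdiv_lt_0_compat; lra.
  intros lam Hlam HlamR.
  assert (HlamG : lam * Gm < Rb).
  { apply (Rmult_lt_compat_r Gm) in HlamR; auto.
    replace (Rb / (2 * Gm) * Gm) with (Rb / 2) in HlamR by (field; lra). lra. }
  set (M := 17 / lam).
  assert (HM : 16 < lam * M) by (unfold M; replace (lam * (17 / lam)) with 17 by (field; lra); lra).
  destruct (Hm M) as [d0 [Hd0 Hd0']].
  set (d := Rmin d0 Rb).
  assert (Hd : forall t y, 0 < t < 1 -> 0 < y < d -> M * y <= G t y).
  { intros t y Ht Hy. apply Hd0'; auto. pose proof (Rmin_l d0 Rb). unfold d in *. lra. }
  assert (Hdp : 0 < d) by (unfold d; apply Rmin_glb_lt; lra).
  assert (HdR : d <= Rb) by (unfold d; apply Rmin_r).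
  exact (core_exists U Um Ua Un Uu Uc G Rb Gm lam d M HG0 HGc2 HGb HGm HRb Hlam HlamG HM Hd Hdp HdR).
Qed.



From Coquelicot Require Import Coquelicot.

Lemma exp_le x y : x <= y -> exp x <= exp y.
Proof. intros H. destruct (Rle_lt_or_eq_dec _ _ H) as [H'|H']. apply Rlt_le, exp_increasing; auto. subst; lra. Qed.

Lemma Rpower_pos x e : 0 < Rpower x e.
Proof. unfold Rpower. apply exp_pos. Qed.

Lemma Rpower_le_base x y e : 0 < x -> x <= y -> 0 <= e -> Rpower x e <= Rpower y e.
Proof.
  intros Hx Hxy He. unfold Rpower. apply exp_le. apply Rmult_le_compat_l; auto. apply ln_le; auto.
Qed.

Lemma Rpower_inv_exp x e : 0 < x -> 0 < e -> Rpower (Rpower x e) (1 / e) = x.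
Proof.
  intros Hx He. rewrite Rpower_mult. replace (e * (1 / e)) with 1 by (field; lra). apply Rpower_1; auto.
Qed.

Lemma cont_of_deriv f t : ex_derive f t -> continuity_pt f t.
Proof. intros H. apply continuity_pt_filterlim. exact (ex_derive_continuous f t H). Qed.

Section Inst3.
Variables r1 r2 : R.
Variable k : nat.
Hypothesis Hr1 : 0 < r1.
Hypothesis Hr12 : r1 < r2.

Let N := S (S (S k)).
Let n := INR N.
Let a := Rpower r1 (n - 2).
Let b := Rpower r2 (n - 2).

Lemma n_ge3 : 3 <= n.
Proof. unfold n, N. rewrite !S_INR. pose proof (pos_INR k). lra. Qed.

Lemma ab_pos : 0 < a /\ a < b.
Proof.
  pose proof n_ge3. split. apply Rpower_pos.
  unfold a, b, Rpower. apply exp_increasing. apply Rmult_lt_compat_l. lra. apply ln_increasing; lra.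
Qed.

Lemma cA_eq : cA r1 r2 N = a * b / (b - a).
Proof. unfold cA. fold n. rewrite <- Rpower_mult_distr by lra. reflexivity. Qed.

Lemma cB_eq : cB r1 r2 N = b / (b - a).
Proof. unfold cB. fold n. reflexivity. Qed.

Lemma cBt_pos t : t <= 1 -> 0 < cB r1 r2 N - t.
Proof.
  intros Ht. destruct ab_pos. rewrite cB_eq.
  replace (b / (b - a) - t) with ((b - t * (b - a)) / (b - a)) by (field; lra).
  apply Rdiv_lt_0_compat; nra.
Qed.

Lemma ratio_eq t : t <= 1 -> cA r1 r2 N / (cB r1 r2 N - t) = a * b / (b - t * (b - a)).
Proof.
  intros Ht. destruct ab_pos. rewrite cA_eq, cB_eq.
  assert (0 < b - t * (b - a)) by nra.
  field. lra.
Qed.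

Lemma ratio_range t : 0 <= t <= 1 -> a <= cA r1 r2 N / (cB r1 r2 N - t) <= b.
Proof.
  intros Ht. destruct ab_pos. rewrite ratio_eq by lra.
  assert (a <= b - t * (b - a) <= b) by nra.
  split.
  - apply (Rmult_le_reg_r (b - t * (b - a))). lra. unfold Rdiv. rewrite Rmult_assoc, Rinv_l by lra. nra.
  - apply (Rmult_le_reg_r (b - t * (b - a))). lra. unfold Rdiv. rewrite Rmult_assoc, Rinv_l by lra. nra.
Qed.

Lemma rad3_range t : 0 <= t <= 1 -> r1 <= radius r1 r2 N t <= r2.
Proof.
  intros Ht. pose proof n_ge3. destruct ab_pos. destruct (ratio_range t Ht).
  change (radius r1 r2 N t) with (Rpower (cA r1 r2 N / (cB r1 r2 N - t)) (1 / (INR N - 2))). fold n.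
  assert (He : 0 <= 1 / (n - 2)) by (apply Rlt_le, Rdiv_lt_0_compat; lra).
  assert (E1 : Rpower a (1 / (n - 2)) = r1) by (apply Rpower_inv_exp; lra).
  assert (E2 : Rpower b (1 / (n - 2)) = r2) by (apply Rpower_inv_exp; lra).
  split.
  - eapply Rle_trans; [right; symmetry; exact E1| apply Rpower_le_base; auto].
  - eapply Rle_trans; [apply (Rpower_le_base _ b); auto; lra| right; exact E2].
Qed.

Lemma rad3_cont t : 0 <= t <= 1 -> continuity_pt (radius r1 r2 N) t.
Proof.
  intros Ht. apply cont_of_deriv.
  change (radius r1 r2 N) with (fun t => Rpower (cA r1 r2 N / (cB r1 r2 N - t)) (1 / (INR N - 2))).
  unfold Rpower. pose proof (cBt_pos t ltac:(lra)). pose proof (ratio_range t Ht). destruct ab_pos.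
  auto_derive. split; [lra| split; [|exact I]]. change (0 < cA r1 r2 N / (cB r1 r2 N - t)). destruct H0. lra.
Qed.

Lemma q3_pos t : 0 <= t <= 1 -> 0 < qfun r1 r2 N t.
Proof.
  intros Ht. pose proof n_ge3.
  change (qfun r1 r2 N t) with (/ ((INR N - 2) ^ 2) * Rpower (cA r1 r2 N) (2 / (INR N - 2))
         / Rpower (cB r1 r2 N - t) (2 * (INR N - 1) / (INR N - 2))). fold n.
  apply Rdiv_lt_0_compat; [apply Rmult_lt_0_compat|]; try apply Rpower_pos.
  apply Rinv_0_lt_compat. apply pow_lt. lra.
Qed.

Lemma q3_cont t : 0 <= t <= 1 -> continuity_pt (qfun r1 r2 N) t.
Proof.
  intros Ht. apply cont_of_deriv. pose proof n_ge3.
  change (qfun r1 r2 N) with (fun t => / ((INR N - 2) ^ 2) * Rpower (cA r1 r2 N) (2 / (INR N - 2))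
         / Rpower (cB r1 r2 N - t) (2 * (INR N - 1) / (INR N - 2))).
  pose proof (cBt_pos t ltac:(lra)).
  unfold Rpower. auto_derive. split. lra. split; auto. apply Rgt_not_eq, exp_pos.
Qed.

End Inst3.

Section Inst2.
Variables r1 r2 : R.
Hypothesis Hr1 : 0 < r1.
Hypothesis Hr12 : r1 < r2.

Lemma rad2_range t : 0 <= t <= 1 -> r1 <= radius r1 r2 2 t <= r2.
Proof.
  intros Ht. change (radius r1 r2 2 t) with (r2 * Rpower (r1 / r2) t).
  assert (Hq : 0 < r1 / r2 < 1).
  { split. apply Rdiv_lt_0_compat; lra. apply (Rmult_lt_reg_r r2). lra. unfold Rdiv. rewrite Rmult_assoc, Rinv_l by lra. lra. }
  assert (Hl : ln (r1 / r2) < 0) by (rewrite <- ln_1; apply ln_increasing; lra).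
  unfold Rpower. split.
  - assert (exp (1 * ln (r1 / r2)) <= exp (t * ln (r1 / r2))) by (apply exp_le; nra).
    rewrite Rmult_1_l, exp_ln in H by lra.
    apply (Rmult_le_compat_l r2) in H; [|lra]. replace (r2 * (r1 / r2)) with r1 in H by (field; lra). lra.
  - assert (exp (t * ln (r1 / r2)) <= exp 0) by (apply exp_le; nra).
    rewrite exp_0 in H. apply (Rmult_le_compat_l r2) in H; lra.
Qed.

Lemma rad2_cont t : continuity_pt (radius r1 r2 2) t.
Proof.
  apply cont_of_deriv. change (radius r1 r2 2) with (fun t => r2 * Rpower (r1 / r2) t).
  unfold Rpower. auto_derive. auto.
Qed.

Lemma q2_pos t : 0 < qfun r1 r2 2 t.
Proof.
  change (qfun r1 r2 2 t) with ((r2 * Rpower (r1 / r2) t * ln (r2 / r1)) ^ 2).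
  assert (0 < ln (r2 / r1)).
  { rewrite <- ln_1. apply ln_increasing. lra. apply (Rmult_lt_reg_r r1). lra. unfold Rdiv. rewrite Rmult_assoc, Rinv_l by lra. lra. }
  apply pow_lt. apply Rmult_lt_0_compat; auto. apply Rmult_lt_0_compat. lra. apply Rpower_pos.
Qed.

Lemma q2_cont t : continuity_pt (qfun r1 r2 2) t.
Proof.
  apply cont_of_deriv. change (qfun r1 r2 2) with (fun t => (r2 * Rpower (r1 / r2) t * ln (r2 / r1)) ^ 2).
  unfold Rpower. auto_derive. auto.
Qed.
End Inst2.

Lemma eps_of_cont_pt f x : continuity_pt f x ->
  forall eps, 0 < eps -> exists del, 0 < del /\ forall y, Rabs (y - x) < del -> Rabs (f y - f x) < eps.
Proof.
  intros H eps He. destruct (H eps He) as [del [Hdel Hd]]. exists del. split; auto.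
  intros y Hy. destruct (Req_dec y x) as [E|E].
  - subst. rewrite Rminus_diag, Rabs_R0. auto.
  - apply (Hd y). split; [split; [exact I| intro; apply E; symmetry; auto]| simpl; unfold R_dist; auto].
Qed.

Definition clamp t := Rmax 0 (Rmin t 1).

Lemma clamp_range t : 0 <= clamp t <= 1.
Proof. unfold clamp, Rmax, Rmin. repeat destruct Rle_dec; lra. Qed.

Lemma clamp_id t : 0 <= t <= 1 -> clamp t = t.
Proof. intros H. unfold clamp, Rmax, Rmin. repeat destruct Rle_dec; lra. Qed.

Lemma abs_bounds a : - Rabs a <= a <= Rabs a.
Proof. unfold Rabs. destruct Rcase_abs; lra. Qed.

Lemma clamp_lip t t' : Rabs (clamp t' - clamp t) <= Rabs (t' - t).
Proof.
  pose proof (abs_bounds (t' - t)). apply Rabs_le.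
  unfold clamp, Rmax, Rmin. repeat destruct Rle_dec; lra.
Qed.

Lemma max0_lip y y' : Rabs (Rmax 0 y' - Rmax 0 y) <= Rabs (y' - y).
Proof.
  pose proof (abs_bounds (y' - y)). apply Rabs_le.
  unfold Rmax. repeat destruct Rle_dec; lra.
Qed.

Lemma max0_ge y : 0 <= Rmax 0 y.
Proof. apply Rmax_l. Qed.

Section Main.
Variables r1 r2 : R.
Variable N : nat.
Variable h : R -> R -> R.
Hypothesis Hr1 : 0 < r1.
Hypothesis Hr12 : r1 < r2.
Hypothesis HN : (2 <= N)%nat.
Hypothesis Hcont : continuous_on_domain r1 r2 h.
Hypothesis Hh0 : forall t u, r1 <= t <= r2 -> 0 <= u -> 0 <= h t u.

Lemma Ncases : N = 2%nat \/ exists k, N = S (S (S k)).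
Proof. destruct N as [|[|[|k]]]; [lia|lia|left; reflexivity|right; exists k; reflexivity]. Qed.

Lemma rad_range t : 0 <= t <= 1 -> r1 <= radius r1 r2 N t <= r2.
Proof.
  intros Ht. destruct Ncases as [E|[k E]]; rewrite E.
  apply rad2_range; auto. apply rad3_range; auto.
Qed.

Lemma rad_cont t : 0 <= t <= 1 -> continuity_pt (radius r1 r2 N) t.
Proof.
  intros Ht. destruct Ncases as [E|[k E]]; rewrite E.
  apply rad2_cont. apply rad3_cont; auto.
Qed.

Lemma q_pos t : 0 <= t <= 1 -> 0 < qfun r1 r2 N t.
Proof.
  intros Ht. destruct Ncases as [E|[k E]]; rewrite E.
  apply q2_pos; auto. apply q3_pos; auto.
Qed.

Lemma q_cont t : 0 <= t <= 1 -> continuity_pt (qfun r1 r2 N) t.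
Proof.
  intros Ht. destruct Ncases as [E|[k E]]; rewrite E.
  apply q2_cont. apply q3_cont; auto.
Qed.

Definition FF t z := qfun r1 r2 N t * h (radius r1 r2 N t) z.
Definition GG t y := FF (clamp t) (Rmax 0 y).

Lemma FF_cont t z : 0 <= t <= 1 -> 0 <= z -> forall eps, 0 < eps -> exists del, 0 < del /\
  forall t' z', 0 <= t' <= 1 -> 0 <= z' -> Rabs (t' - t) < del -> Rabs (z' - z) < del ->
  Rabs (FF t' z' - FF t z) < eps.
Proof.
  intros Ht Hz eps He. unfold FF.
  set (q0 := qfun r1 r2 N t). set (H0 := h (radius r1 r2 N t) z).
  pose proof (Rabs_pos q0). pose proof (Rabs_pos H0).
  set (e1 := Rmin 1 (eps / (2 * (Rabs H0 + 1)))).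
  assert (He1 : 0 < e1) by (apply Rmin_glb_lt; [lra| apply Rdiv_lt_0_compat; lra]).
  destruct (eps_of_cont_pt _ _ (q_cont t Ht) e1 He1) as [dq [Hdq Hq]].
  set (e2 := eps / (2 * (Rabs q0 + 1))).
  assert (He2 : 0 < e2) by (apply Rdiv_lt_0_compat; lra).
  destruct (Hcont (radius r1 r2 N t) z (rad_range t Ht) Hz e2 He2) as [dh [Hdh Hh]].
  destruct (eps_of_cont_pt _ _ (rad_cont t Ht) dh Hdh) as [dr [Hdr Hr]].
  exists (Rmin dq (Rmin dr dh)). split.
  { apply Rmin_glb_lt; auto. apply Rmin_glb_lt; auto. }
  intros t' z' Ht' Hz' Htt Hzz.
  assert (A1 : Rabs (t' - t) < dq) by (eapply Rlt_le_trans; [exact Htt| apply Rmin_l]).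
  assert (A2 : Rabs (t' - t) < dr) by (eapply Rlt_le_trans; [exact Htt| eapply Rle_trans; [apply Rmin_r| apply Rmin_l]]).
  assert (A3 : Rabs (z' - z) < dh) by (eapply Rlt_le_trans; [exact Hzz| eapply Rle_trans; [apply Rmin_r| apply Rmin_r]]).
  pose proof (Hq t' A1) as Q. pose proof (Hr t' A2) as Rr.
  pose proof (Hh (radius r1 r2 N t') z' (rad_range t' Ht') Hz' Rr A3) as Hh'.
  fold H0 in Hh'. fold q0 in Q.
  set (q1 := qfun r1 r2 N t') in *. set (HH1 := h (radius r1 r2 N t') z') in *.
  replace (q1 * HH1 - q0 * H0) with (q1 * (HH1 - H0) + (q1 - q0) * H0) by ring.
  eapply Rle_lt_trans. apply Rabs_triang. rewrite !Rabs_mult.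
  assert (Hq1 : Rabs q1 <= Rabs q0 + 1).
  { replace q1 with ((q1 - q0) + q0) by ring. eapply Rle_trans. apply Rabs_triang.
    assert (e1 <= 1) by (unfold e1; apply Rmin_l). lra. }
  assert (B1 : Rabs q1 * Rabs (HH1 - H0) <= (Rabs q0 + 1) * e2).
  { apply Rmult_le_compat; try apply Rabs_pos; lra. }
  assert (B2 : Rabs (q1 - q0) * Rabs H0 <= e1 * Rabs H0).
  { apply Rmult_le_compat_r; [apply Rabs_pos| lra]. }
  assert (B3 : e1 * Rabs H0 <= eps / (2 * (Rabs H0 + 1)) * Rabs H0).
  { apply Rmult_le_compat_r; [apply Rabs_pos| apply Rmin_r]. }
  assert (B4 : eps / (2 * (Rabs H0 + 1)) * Rabs H0 < eps / 2).
  { replace (eps / (2 * (Rabs H0 + 1)) * Rabs H0) with (eps / 2 * (Rabs H0 / (Rabs H0 + 1))) by (field; lra).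
    assert (Rabs H0 / (Rabs H0 + 1) < 1).
    { apply (Rmult_lt_reg_r (Rabs H0 + 1)). lra. unfold Rdiv. rewrite Rmult_assoc, Rinv_l by lra. lra. }
    nra. }
  assert (B5 : (Rabs q0 + 1) * e2 = eps / 2) by (unfold e2; field; lra).
  lra.
Qed.

Lemma GG0 : forall t y, 0 <= GG t y.
Proof.
  intros t y. unfold GG, FF. apply Rmult_le_pos.
  apply Rlt_le, q_pos, clamp_range. apply Hh0. apply rad_range, clamp_range. apply max0_ge.
Qed.

Lemma GGc : forall t y eps, 0 < eps -> exists del, 0 < del /\
  forall t' y', Rabs (t' - t) < del -> Rabs (y' - y) < del -> Rabs (GG t' y' - GG t y) < eps.
Proof.
  intros t y eps He.
  destruct (FF_cont (clamp t) (Rmax 0 y) (clamp_range t) (max0_ge y) eps He) as [del [Hdel H]].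
  exists del. split; auto. intros t' y' H1 H2. unfold GG. apply H.
  apply clamp_range. apply max0_ge.
  eapply Rle_lt_trans. apply clamp_lip. auto.
  eapply Rle_lt_trans. apply max0_lip. auto.
Qed.

End Main.

Lemma assemble (u v : R -> R) (g : R -> R) :
  (forall t, 0 < t < 1 -> derivable_pt_lim u t (v t)) ->
  (forall t, 0 < t < 1 -> derivable_pt_lim v t (g t)) ->
  (forall t, 0 < t < 1 -> continuity_pt g t) ->
  forall t, 0 < t < 1 ->
    ex_derive u t /\ ex_derive (Derive u) t /\ continuous (Derive (Derive u)) t /\
    Derive (Derive u) t = g t.
Proof.
  intros Hu Hv Hg.
  assert (Du : forall t, 0 < t < 1 -> Derive u t = v t).
  { intros t Ht. apply is_derive_unique. apply is_derive_Reals. auto. }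
  assert (Loc : forall t, 0 < t < 1 -> forall P : R -> Prop, (forall y, 0 < y < 1 -> P y) -> locally t P).
  { intros t Ht P HP. apply (locally_interval P t (Finite 0) (Finite 1)); simpl; try lra.
    intros y H1 H2. apply HP. lra. }
  assert (Dv : forall t, 0 < t < 1 -> is_derive (Derive u) t (g t)).
  { intros t Ht. apply (is_derive_ext_loc v). apply (Loc t Ht). intros y Hy. symmetry. auto.
    apply is_derive_Reals. auto. }
  assert (DDu : forall t, 0 < t < 1 -> Derive (Derive u) t = g t).
  { intros t Ht. apply is_derive_unique. auto. }
  intros t Ht. split; [|split; [|split]].
  - exists (v t). apply is_derive_Reals. auto.
  - exists (g t). auto.
  - apply (continuous_ext_loc _ g). apply (Loc t Ht). intros y Hy. symmetry. auto.
    apply continuity_pt_filterlim. auto.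
  - auto.
Qed.


From mathcomp Require classical.filter classical.classical_sets classical.boolp.
From mathcomp Require ssrnat.
Lemma ultra_nat_ex : exists U : (nat -> Prop) -> Prop,
  (forall A B : nat -> Prop, U A -> (forall n, A n -> B n) -> U B) /\
  (forall A B : nat -> Prop, U A -> U B -> U (fun n => A n /\ B n)) /\
  ~ U (fun _ => False) /\
  (forall A : nat -> Prop, U A \/ U (fun n => ~ A n)) /\
  (forall N, U (fun n => (N <= n)%nat)).
Proof.
  destruct (filter.ultraFilterLemma (@filter.eventually_filter)) as [G [HG Hsub]].
  exists G.
  pose proof (@filter.ultra_proper _ _ HG) as HP.
  pose proof (@filter.filter_filter _ _ HP) as HF.
  split; [|split; [|split; [|split]]].
  - intros A B HA HAB. exact (@filter.filterS _ _ HF A B HAB HA).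
  - intros A B HA HB. exact (@filter.filterI _ _ HF A B HA HB).
  - exact (@filter.filter_not_empty _ _ HP).
  - intros A. exact (filter.in_ultra_setVsetC A HG).
  - intros N. apply Hsub. exists N. exact I.
    intros n Hn. simpl in Hn. exact (proj2 (Bool.reflect_iff _ _ ssrnat.leP) Hn).
Qed.
Theorem main_thm (r1 r2 : R) (N : nat) (h : R -> R -> R) :
  0 < r1 -> r1 < r2 -> (2 <= N)%nat ->
  continuous_on_domain r1 r2 h ->
  (forall t u, r1 <= t <= r2 -> 0 <= u -> 0 <= h t u) ->
  (forall t, r1 <= t <= r2 -> h t 0 = 0) ->
  (forall M, exists d, 0 < d /\
     forall t u, 0 < t < 1 -> 0 < u < d -> M < ffun r1 r2 N h t u / u) ->
  forall Rb, 0 < Rb ->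
  exists lamR, 0 < lamR /\
    forall lam, 0 < lam -> lam < lamR ->
      exists u : R -> R, positive_solution r1 r2 N h lam u /\
        (forall t, 0 <= t <= 1 -> u t <= Rb).
Proof.
  intros Hr1 Hr12 HN Hcont Hh0 Hhz Hblow Rb HRb.
  destruct ultra_nat_ex as [U [Um [Ua [Un [Uu Uc]]]]].
  set (G := GG r1 r2 N h).
  assert (HG0 : forall t y, 0 <= G t y) by (apply GG0; auto).
  assert (HGc : forall t y eps, 0 < eps -> exists del, 0 < del /\
    forall t' y', Rabs (t' - t) < del -> Rabs (y' - y) < del -> Rabs (G t' y' - G t y) < eps)
    by (apply GGc; auto).
  assert (Hbd : exists Gm, forall t y, y <= Rb -> G t y <= Gm).
  { destruct (box_bounded U Um Ua Un Uu Uc (FF r1 r2 N h) 0 1 0 Rb) as [B HB]; try lra.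
    - intros t y Ht Hy eps He. destruct (FF_cont r1 r2 N h) with (t := t) (z := y) (eps := eps) as [del [Hd1 Hd2]]; auto; try lra.
      exists del. split; auto. intros t' y' H1 H2 H3 H4. apply Hd2; auto; lra.
    - exists B. intros t y Hy. unfold G, GG. apply HB. apply clamp_range.
      split. apply max0_ge. unfold Rmax. destruct Rle_dec; lra. }
  assert (Hqm : exists mq, 0 < mq /\ forall t, 0 <= t <= 1 -> mq <= qfun r1 r2 N t).
  { apply (pos_min U Um Ua Un Uu Uc).
    - intros t Ht eps He. destruct (eps_of_cont_pt _ _ (q_cont r1 r2 N Hr1 Hr12 HN t Ht) eps He) as [del [Hd1 Hd2]].
      exists del. split; auto.
    - intros t Ht. apply q_pos; auto. }
  destruct Hqm as [mq [Hmq Hmq']].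
  assert (Hm : forall M, exists d, 0 < d /\ forall t y, 0 < t < 1 -> 0 < y < d -> M * y <= G t y).
  { intros M. destruct (Hblow (Rabs M / mq)) as [d [Hd Hd']]. exists d. split; auto.
    intros t y Ht Hy. pose proof (Hd' t y Ht Hy) as Q.
    unfold G, GG, FF. rewrite clamp_id by lra.
    replace (Rmax 0 y) with y by (unfold Rmax; destruct Rle_dec; lra).
    unfold ffun in Q.
    set (f := h (radius r1 r2 N t) y) in *.
    assert (Hf : Rabs M / mq * y < f).
    { apply (Rmult_lt_compat_r y) in Q; [|lra]. unfold Rdiv at 2 in Q. rewrite Rmult_assoc, Rinv_l in Q by lra. lra. }
    assert (0 <= f) by (apply Hh0; [apply rad_range; auto; lra| lra]).
    pose proof (Hmq' t ltac:(lra)).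
    assert (mq * (Rabs M / mq * y) <= qfun r1 r2 N t * f).
    { apply Rmult_le_compat; try lra. apply Rmult_le_pos; [apply Rdiv_le_0_compat; [apply Rabs_pos| lra]| lra]. }
    replace (mq * (Rabs M / mq * y)) with (Rabs M * y) in H1 by (field; lra).
    assert (M * y <= Rabs M * y) by (apply Rmult_le_compat_r; [lra| apply RRle_abs]).
    lra. }
  destruct (core_thm U Um Ua Un Uu Uc G Rb HRb HG0 HGc Hbd Hm) as [lamR [HlamR Hsol]].
  exists lamR. split; auto. intros lam Hl Hl2.
  destruct (Hsol lam Hl Hl2) as [u [v [Hc [H0 [H1 [Hpos [Hb [Hdu [Hdv Hcg]]]]]]]]].
  exists u. split; [|exact Hb].
  assert (Hcg' : forall t, 0 < t < 1 -> continuity_pt (fun y => - lam * G y (u y)) t).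
  { intros t Ht. apply (continuity_pt_scal (fun y => G y (u y)) (- lam) t). auto. }
  pose proof (assemble u v (fun y => - lam * G y (u y)) Hdu Hdv Hcg') as As.
  unfold positive_solution. split; [exact Hc|]. split; [|split; [|split; [exact H0|split; [exact H1| exact Hpos]]]].
  - intros t Ht. destruct (As t Ht) as [A [B [C _]]]. auto.
  - intros t Ht. destruct (As t Ht) as [_ [_ [_ D]]]. rewrite D.
    unfold G, GG, FF, ffun. rewrite clamp_id by lra.
    replace (Rmax 0 (u t)) with (u t) by (pose proof (Hpos t Ht); unfold Rmax; destruct Rle_dec; lra).
    ring.
Qed.

Theorem theorem1p2 (r1 r2 : R) (N : nat) (h : R -> R -> R) :
  0 < r1 -> r1 < r2 -> (2 <= N)%nat ->
  continuous_on_domain r1 r2 h ->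
  (forall t u, r1 <= t <= r2 -> 0 <= u -> 0 <= h t u) ->
  (forall t, r1 <= t <= r2 -> h t 0 = 0) ->
  (* f(t,u)/u -> +oo as u -> 0+, uniformly in t in (0,1) *)
  (forall M, exists d, 0 < d /\
     forall t u, 0 < t < 1 -> 0 < u < d -> M < ffun r1 r2 N h t u / u) ->
  forall Rb, 0 < Rb ->
  exists lamR, 0 < lamR /\
    forall lam, 0 < lam -> lam < lamR ->
      exists u : R -> R, positive_solution r1 r2 N h lam u /\
        (forall t, 0 <= t <= 1 -> u t <= Rb).
Proof.
  exact (main_thm r1 r2 N h).
Qed.
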